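(* Let $\alpha\in\mathbb C\setminus[0,\infty)$ with $\mathrm{Re}(\alpha)>0$, and let $s\in\mathbb C$ with $\mathrm{Re}(s)>1$ and $\mathrm{Re}(s)>\mathrm{Re}(\alpha)$. Then $\Phi_\alpha(x)/x^{s+1}$ is Lebesgue integrable on $(1,\infty)$ and $$1-\frac s\alpha=\exp\left[-s(s-1)\int_1^\infty\frac{\Phi_\alpha(x)}{x^{s+1}}\,dx\right].$$
   Context: $\gamma$ is Euler's constant, $\log$ denotes the principal branch on $\mathbb C\setminus(-\infty,0]$, $\mathrm{Ei}_0(z):=\sum_{k\ge1}\frac{z^k}{k\cdot k!}$ (entire), and for $\alpha\in\mathbb C\setminus[0,\infty)$ and $x>1$, $$\varphi_\alpha(x):=\gamma+\log(\log x)+\log(-\alpha)+\mathrm{Ei}_0(\alpha\log x),\qquad \Phi_\alpha(x):=x\int_1^x\frac{\varphi_\alpha(y)}{y^2}\,dy.$$ *)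

(* Defs.v *)
From Stdlib Require Import Reals Lra ClassicalEpsilon Arith.Factorial.
Open Scope R_scope.

Definition Cplx : Type := (R * R)%type.
Definition Re (z : Cplx) : R := fst z.
Definition Im (z : Cplx) : R := snd z.
Definition CR (x : R) : Cplx := (x, 0).
Definition Cadd (z w : Cplx) : Cplx := (Re z + Re w, Im z + Im w).
Definition Copp (z : Cplx) : Cplx := (- Re z, - Im z).
Definition Csub (z w : Cplx) : Cplx := Cadd z (Copp w).
Definition Cmul (z w : Cplx) : Cplx :=
  (Re z * Re w - Im z * Im w, Re z * Im w + Im z * Re w).
Definition Cinv (z : Cplx) : Cplx :=
  (Re z / (Re z ^ 2 + Im z ^ 2), - Im z / (Re z ^ 2 + Im z ^ 2)).
Definition Cdiv (z w : Cplx) : Cplx := Cmul z (Cinv w).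
Definition Cnorm (z : Cplx) : R := sqrt (Re z ^ 2 + Im z ^ 2).
Fixpoint Cpow (z : Cplx) (n : nat) : Cplx :=
  match n with O => CR 1 | S n => Cmul z (Cpow z n) end.

Definition Cexp (z : Cplx) : Cplx := (exp (Re z) * cos (Im z), exp (Re z) * sin (Im z)).

(** principal argument on Cplx \ (-oo,0]:  Arg z = 2 atan (Im z / (|z| + Re z)),
    which lies in (-pi, pi); principal logarithm log z = ln|z| + i Arg z. *)
Definition Carg (z : Cplx) : R := 2 * atan (Im z / (Cnorm z + Re z)).
Definition Clog (z : Cplx) : Cplx := (ln (Cnorm z), Carg z).

Definition Crpow (x : R) (w : Cplx) : Cplx := Cexp (Cmul w (CR (ln x))).

Definition C_cv (u : nat -> Cplx) (l : Cplx) : Prop :=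
  Un_cv (fun n => Re (u n)) (Re l) /\ Un_cv (fun n => Im (u n)) (Im l).
Definition Clim (u : nat -> Cplx) : Cplx :=
  epsilon (inhabits (CR 0)) (fun l => C_cv u l).

Definition euler_gamma : R :=
  epsilon (inhabits 0)
    (fun g => Un_cv (fun n => sum_f_R0 (fun k => / INR (S k)) n - ln (INR (S n))) g).

Fixpoint Ei0_partial (z : Cplx) (n : nat) : Cplx :=
  match n with
  | O => CR 0
  | S m => Cadd (Ei0_partial z m)
                (Cdiv (Cpow z (S m)) (CR (INR (S m) * INR (fact (S m)))))
  end.
Definition Ei0 (z : Cplx) : Cplx := Clim (Ei0_partial z).

Definition phi (alpha : Cplx) (x : R) : Cplx :=
  Cadd (Cadd (Cadd (CR euler_gamma) (Clog (CR (ln x)))) (Clog (Copp alpha)))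
       (Ei0 (Cmul alpha (CR (ln x)))).

Definition is_RInt (f : R -> R) (a b v : R) : Prop :=
  exists pr : Riemann_integrable f a b, RiemannInt pr = v.
Definition is_CRInt (f : R -> Cplx) (a b : R) (v : Cplx) : Prop :=
  is_RInt (fun x => Re (f x)) a b (Re v) /\ is_RInt (fun x => Im (f x)) a b (Im v).
Definition C_RI (f : R -> Cplx) (a b : R) : Prop := exists v, is_CRInt f a b v.

Definition has_Cint_open (f : R -> Cplx) (a b : R) (v : Cplx) : Prop :=
  (forall c d, a < c -> c <= d -> d < b -> C_RI f c d) /\
  (forall eps, 0 < eps -> exists delta, 0 < delta /\
     forall c d, a < c < a + delta -> b - delta < d < b -> c <= d ->
       exists w, is_CRInt f c d w /\ Cnorm (Csub w v) < eps).
Definition Cint_open (f : R -> Cplx) (a b : R) : Cplx :=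
  epsilon (inhabits (CR 0)) (fun v => has_Cint_open f a b v).

Definition has_Cint_infty (f : R -> Cplx) (a : R) (v : Cplx) : Prop :=
  (forall c d, a < c -> c <= d -> C_RI f c d) /\
  (forall eps, 0 < eps -> exists delta, 0 < delta /\ exists M,
     forall c d, a < c < a + delta -> M < d -> c <= d ->
       exists w, is_CRInt f c d w /\ Cnorm (Csub w v) < eps).

(** Lebesgue integrability on (a, +oo) of a function that is Riemann integrable
    on every compact subinterval: the integrals of |f| over the compact
    subintervals [c,d] of (a,+oo) are bounded (monotone convergence). *)
Definition Leb_integrable_infty (f : R -> Cplx) (a : R) : Prop :=
  (forall c d, a < c -> c <= d -> C_RI f c d) /\
  (exists M, forall c d, a < c -> c <= d ->
     exists w, is_RInt (fun x => Cnorm (f x)) c d w /\ w <= M).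

Definition Phi (alpha : Cplx) (x : R) : Cplx :=
  Cmul (CR x) (Cint_open (fun y => Cdiv (phi alpha y) (CR (y ^ 2))) 1 x).

(* Main.v *)
Require Import Defs.
From Stdlib Require Import Reals Lra Lia ClassicalEpsilon Arith.Factorial.
From Coquelicot Require Import Coquelicot.
Import Defs.
Open Scope R_scope.
Lemma Cplx_eq (z w : Cplx) : Re z = Re w -> Im z = Im w -> z = w.
Proof. destruct z, w; unfold Re, Im; simpl; intros; subst; reflexivity. Qed.

Ltac csimpl := unfold Csub, Cdiv, Cadd, Copp, Cmul, Cinv, CR, Re, Im in *; cbn [fst snd] in *.
Ltac ceq := apply Cplx_eq; csimpl.

Lemma Re_add z w : Re (Cadd z w) = Re z + Re w. Proof. reflexivity. Qed.
Lemma Im_add z w : Im (Cadd z w) = Im z + Im w. Proof. reflexivity. Qed.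
Lemma Re_mul z w : Re (Cmul z w) = Re z * Re w - Im z * Im w. Proof. reflexivity. Qed.
Lemma Im_mul z w : Im (Cmul z w) = Re z * Im w + Im z * Re w. Proof. reflexivity. Qed.
Lemma Re_CR x : Re (CR x) = x. Proof. reflexivity. Qed.
Lemma Im_CR x : Im (CR x) = 0. Proof. reflexivity. Qed.
Lemma Re_opp z : Re (Copp z) = - Re z. Proof. reflexivity. Qed.
Lemma Im_opp z : Im (Copp z) = - Im z. Proof. reflexivity. Qed.
Lemma Re_sub z w : Re (Csub z w) = Re z - Re w. Proof. reflexivity. Qed.
Lemma Im_sub z w : Im (Csub z w) = Im z - Im w. Proof. reflexivity. Qed.

Lemma Cnorm_Cmod z : Cnorm z = Cmod z. Proof. reflexivity. Qed.
Lemma Cnorm_ge0 z : 0 <= Cnorm z. Proof. apply sqrt_pos. Qed.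
Lemma Cnorm_mul z w : Cnorm (Cmul z w) = Cnorm z * Cnorm w.
Proof. rewrite !Cnorm_Cmod. apply (Cmod_mult z w). Qed.
Lemma Cnorm_add z w : Cnorm (Cadd z w) <= Cnorm z + Cnorm w.
Proof. rewrite !Cnorm_Cmod. apply (Cmod_triangle z w). Qed.
Lemma Cnorm_opp z : Cnorm (Copp z) = Cnorm z.
Proof. rewrite !Cnorm_Cmod. apply (Cmod_opp z). Qed.
Lemma Cnorm_sub z w : Cnorm (Csub z w) <= Cnorm z + Cnorm w.
Proof. unfold Csub. eapply Rle_trans. apply Cnorm_add. rewrite Cnorm_opp; lra. Qed.
Lemma Cnorm_sub_sym z w : Cnorm (Csub z w) = Cnorm (Csub w z).
Proof. unfold Cnorm; csimpl. f_equal. ring. Qed.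
Lemma Cnorm_CR x : Cnorm (CR x) = Rabs x.
Proof. rewrite Cnorm_Cmod. apply (Cmod_R x). Qed.
Lemma Re_le_Cnorm z : Rabs (Re z) <= Cnorm z.
Proof. rewrite Cnorm_Cmod. apply (re_le_Cmod z). Qed.
Lemma Im_le_Cnorm z : Rabs (Im z) <= Cnorm z.
Proof. pose proof (Rmax_Cmod z). rewrite Cnorm_Cmod. unfold Im.
  eapply Rle_trans; [|exact H]. apply Rmax_r. Qed.
Lemma Cnorm_eq0 z : Cnorm z = 0 -> z = CR 0.
Proof. rewrite Cnorm_Cmod. intro H. apply Cmod_eq_0 in H. rewrite H. reflexivity. Qed.
Lemma Cnorm_tri3 a b c : Cnorm (Csub a c) <= Cnorm (Csub a b) + Cnorm (Csub b c).
Proof. replace (Csub a c) with (Cadd (Csub a b) (Csub b c)) by (ceq; ring).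
  apply Cnorm_add. Qed.
Lemma Cnorm_pos_ne z : z <> CR 0 -> 0 < Cnorm z.
Proof. intro H. destruct (Cnorm_ge0 z) as [h|h]; auto. exfalso; apply H, Cnorm_eq0; auto. Qed.
Lemma Cnorm_sq z : Cnorm z * Cnorm z = Re z * Re z + Im z * Im z.
Proof. unfold Cnorm. rewrite sqrt_sqrt. ring. nra. Qed.

Lemma Cmul_inv z : z <> CR 0 -> Cmul z (Cinv z) = CR 1.
Proof. intro H. assert (Re z ^ 2 + Im z ^ 2 <> 0).
  { intro h. apply H. destruct z as [a b]. unfold Re, Im in *; simpl in *.
    assert (a = 0) by nra. assert (b = 0) by nra. subst. reflexivity. }
  destruct z as [a b]; unfold Re, Im in *; simpl in *.
  ceq; field; intro hh; apply H0; lra. Qed.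
Lemma Cinv_CR x : x <> 0 -> Cinv (CR x) = CR (/ x).
Proof. intro. ceq; field; auto. Qed.
Lemma Cnorm_inv z : z <> CR 0 -> Cnorm (Cinv z) = / Cnorm z.
Proof. intro H. pose proof (Cmul_inv z H). assert (Cnorm z * Cnorm (Cinv z) = 1).
  { rewrite <- Cnorm_mul, H0, Cnorm_CR. apply Rabs_R1. }
  pose proof (Cnorm_pos_ne z H). field_simplify_eq; [|lra]. lra. Qed.
Definition D (f : R -> R) x l := derivable_pt_lim f x l.
Lemma D_plus f g x a b : D f x a -> D g x b -> D (fun t => f t + g t) x (a + b).
Proof. intros; exact (derivable_pt_lim_plus _ _ _ _ _ H H0). Qed.
Lemma D_minus f g x a b : D f x a -> D g x b -> D (fun t => f t - g t) x (a - b).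
Proof. intros; exact (derivable_pt_lim_minus _ _ _ _ _ H H0). Qed.
Lemma D_mult f g x a b : D f x a -> D g x b -> D (fun t => f t * g t) x (a * g x + f x * b).
Proof. intros; exact (derivable_pt_lim_mult _ _ _ _ _ H H0). Qed.
Lemma D_opp f x a : D f x a -> D (fun t => - f t) x (- a).
Proof. intros; exact (derivable_pt_lim_opp _ _ _ H). Qed.
Lemma D_const c x : D (fun _ => c) x 0.
Proof. exact (derivable_pt_lim_const c x). Qed.
Lemma D_id x : D (fun t => t) x 1.
Proof. exact (derivable_pt_lim_id x). Qed.
Lemma D_comp f g x a b : D g x a -> D f (g x) b -> D (fun t => f (g t)) x (b * a).
Proof. intros; exact (derivable_pt_lim_comp _ _ _ _ _ H H0). Qed.
Lemma D_eq f x a b : D f x a -> a = b -> D f x b.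
Proof. intros; subst; auto. Qed.
Lemma D_ext_loc f g x a : (exists d, 0 < d /\ forall t, Rabs (t - x) < d -> f t = g t) ->
  D f x a -> D g x a.
Proof. intros [d [Hd He]] H. unfold D in *. apply is_derive_Reals in H. apply is_derive_Reals.
  eapply is_derive_ext_loc; [|exact H]. exists (mkposreal d Hd). intros t Ht. apply He. exact Ht. Qed.
Lemma D_ext f g x a : (forall t, f t = g t) -> D f x a -> D g x a.
Proof. intros He H. apply (D_ext_loc f); auto. exists 1; split; [lra|auto]. Qed.
Lemma D_cont f x a : D f x a -> continuity_pt f x.
Proof. intro H. apply derivable_continuous_pt. exists a. exact H. Qed.
Lemma D_exp f x a : D f x a -> D (fun t => exp (f t)) x (exp (f x) * a).
Proof. intro H. eapply D_eq. apply (D_comp exp f x a). auto. apply derivable_pt_lim_exp. cbv beta; ring. Qed.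
Lemma D_cos f x a : D f x a -> D (fun t => cos (f t)) x (- sin (f x) * a).
Proof. intro H. eapply D_eq. apply (D_comp cos f x a). auto. apply derivable_pt_lim_cos. cbv beta; ring. Qed.
Lemma D_sin f x a : D f x a -> D (fun t => sin (f t)) x (cos (f x) * a).
Proof. intro H. eapply D_eq. apply (D_comp sin f x a). auto. apply derivable_pt_lim_sin. cbv beta; ring. Qed.
Lemma D_ln f x a : D f x a -> 0 < f x -> D (fun t => ln (f t)) x (a / f x).
Proof. intros H Hp. eapply D_eq. apply (D_comp ln f x a). auto. apply derivable_pt_lim_ln; auto.
  unfold Rdiv; cbv beta; ring. Qed.
Lemma D_inv f x a : D f x a -> f x <> 0 -> D (fun t => / f t) x (- a / (f x)^2).
Proof. intros H Hn. unfold D in *. apply is_derive_Reals in H. apply is_derive_Reals.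
  apply (is_derive_inv f x a H Hn). Qed.
Lemma D_scal c f x a : D f x a -> D (fun t => c * f t) x (c * a).
Proof. intro H. eapply D_eq. apply D_mult. apply D_const. exact H. cbv beta; ring. Qed.

Definition CD (f : R -> Cplx) x (l : Cplx) :=
  D (fun t => Re (f t)) x (Re l) /\ D (fun t => Im (f t)) x (Im l).

Lemma CD_eq f x a b : CD f x a -> a = b -> CD f x b.
Proof. intros; subst; auto. Qed.
Lemma CD_add f g x a b : CD f x a -> CD g x b -> CD (fun t => Cadd (f t) (g t)) x (Cadd a b).
Proof. intros [H1 H2] [H3 H4]; split; simpl; apply D_plus; auto. Qed.
Lemma CD_opp f x a : CD f x a -> CD (fun t => Copp (f t)) x (Copp a).
Proof. intros [H1 H2]; split; simpl; apply D_opp; auto. Qed.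
Lemma CD_sub f g x a b : CD f x a -> CD g x b -> CD (fun t => Csub (f t) (g t)) x (Csub a b).
Proof. intros. apply CD_add; auto. apply CD_opp; auto. Qed.
Lemma CD_mul f g x a b : CD f x a -> CD g x b ->
  CD (fun t => Cmul (f t) (g t)) x (Cadd (Cmul a (g x)) (Cmul (f x) b)).
Proof. intros [H1 H2] [H3 H4]; split; unfold Cmul, Cadd, Re, Im in *; simpl in *.
  - eapply D_eq. apply D_minus; apply D_mult; eauto. cbv beta; ring.
  - eapply D_eq. apply D_plus; apply D_mult; eauto. cbv beta; ring. Qed.
Lemma CD_const c x : CD (fun _ => c) x (CR 0).
Proof. split; apply D_const. Qed.
Lemma CD_CR f x a : D f x a -> CD (fun t => CR (f t)) x (CR a).
Proof. intro H; split; simpl; auto. apply D_const. Qed.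
Lemma CD_ext_loc f g x a : (exists d, 0 < d /\ forall t, Rabs (t - x) < d -> f t = g t) ->
  CD f x a -> CD g x a.
Proof. intros [d [Hd He]] [H1 H2]; split; [apply (D_ext_loc (fun t => Re (f t)))|apply (D_ext_loc (fun t => Im (f t)))]; auto;
  exists d; split; auto; intros t Ht; rewrite He; auto. Qed.
Lemma CD_ext f g x a : (forall t, f t = g t) -> CD f x a -> CD g x a.
Proof. intros He H. apply (CD_ext_loc f); auto. exists 1; split; [lra|auto]. Qed.
Lemma CD_cont f x a : CD f x a -> continuity_pt (fun t => Re (f t)) x /\ continuity_pt (fun t => Im (f t)) x.
Proof. intros [H1 H2]; split; eapply D_cont; eauto. Qed.
Lemma CD_cmul c f x a : CD f x a -> CD (fun t => Cmul c (f t)) x (Cmul c a).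
Proof. intro H. eapply CD_eq. apply CD_mul. apply CD_const. exact H. ceq; ring. Qed.
Lemma CD_mulc c f x a : CD f x a -> CD (fun t => Cmul (f t) c) x (Cmul a c).
Proof. intro H. eapply CD_eq. apply CD_mul. exact H. apply CD_const. ceq; ring. Qed.

Lemma Cexp_add z w : Cexp (Cadd z w) = Cmul (Cexp z) (Cexp w).
Proof. unfold Cexp; ceq; rewrite exp_plus, ?cos_plus, ?sin_plus; ring. Qed.
Lemma Cexp_0 : Cexp (CR 0) = CR 1.
Proof. unfold Cexp; ceq; rewrite ?exp_0, ?cos_0, ?sin_0; ring. Qed.
Lemma Cnorm_Cexp z : Cnorm (Cexp z) = exp (Re z).
Proof. destruct z as [a b]. unfold Cnorm, Cexp, Re, Im; cbn [fst snd].
  replace ((exp a * cos b) ^ 2 + (exp a * sin b) ^ 2) with (exp a ^ 2).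
  rewrite sqrt_pow2; auto. apply Rlt_le, exp_pos.
  pose proof (sin2_cos2 b). unfold Rsqr in H. nra. Qed.
Lemma Cexp_ne0 z : Cexp z <> CR 0.
Proof. intro H. pose proof (Cnorm_Cexp z). rewrite H, Cnorm_CR, Rabs_R0 in H0.
  pose proof (exp_pos (Re z)). lra. Qed.
Lemma Cexp_opp z : Cmul (Cexp z) (Cexp (Copp z)) = CR 1.
Proof. rewrite <- Cexp_add. replace (Cadd z (Copp z)) with (CR 0) by (ceq; ring). apply Cexp_0. Qed.
Lemma Cinv_Cexp z : Cinv (Cexp z) = Cexp (Copp z).
Proof. pose proof (Cexp_opp z). pose proof (Cmul_inv (Cexp z) (Cexp_ne0 z)).
  assert (Cmul (Cexp (Copp z)) (Cmul (Cexp z) (Cinv (Cexp z))) = Cmul (Cexp (Copp z)) (Cmul (Cexp z) (Cexp (Copp z)))).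
  { rewrite H, H0. reflexivity. }
  replace (Cinv (Cexp z)) with (Cmul (Cexp (Copp z)) (Cmul (Cexp z) (Cinv (Cexp z)))).
  rewrite H1. replace (Cmul (Cexp (Copp z)) (Cmul (Cexp z) (Cexp (Copp z)))) with
    (Cmul (Cmul (Cexp z) (Cexp (Copp z))) (Cexp (Copp z))) by (ceq; ring).
  rewrite H. ceq; ring.
  replace (Cmul (Cexp (Copp z)) (Cmul (Cexp z) (Cinv (Cexp z)))) with
    (Cmul (Cmul (Cexp z) (Cexp (Copp z))) (Cinv (Cexp z))) by (ceq; ring).
  rewrite H. ceq; ring. Qed.
Lemma CD_exp z x a : CD z x a -> CD (fun t => Cexp (z t)) x (Cmul (Cexp (z x)) a).
Proof. intros [H1 H2]. unfold Cexp; split; csimpl.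
  - eapply D_eq. apply D_mult. apply D_exp; eauto. apply D_cos; eauto. cbv beta; ring.
  - eapply D_eq. apply D_mult. apply D_exp; eauto. apply D_sin; eauto. cbv beta; ring. Qed.

Lemma Cexp_Clog z : ~ (Im z = 0 /\ Re z <= 0) -> Cexp (Clog z) = z.
Proof. intro H. destruct z as [x y]. unfold Clog, Carg, Cexp, Cnorm, Re, Im in *; cbn [fst snd] in *.
  set (r := sqrt (x^2+y^2)).
  assert (Hr : r * r = x^2 + y^2) by (unfold r; rewrite sqrt_sqrt; nra).
  assert (Hr0 : 0 <= r) by apply sqrt_pos.
  assert (Hrx : 0 < r + x).
  { destruct (Req_dec y 0). subst. assert (x > 0) by lra. nra.
    assert (y*y > 0) by (apply Rsqr_pos_lt; auto).
    destruct (Rle_lt_dec (r + x) 0); auto. exfalso.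
    assert (r <= -x) by lra. assert (r*r <= x*x) by nra. nra. }
  assert (Hrp : 0 < r) by (destruct (Req_dec y 0); [subst; nra| nra]).
  rewrite exp_ln by auto.
  set (u := y / (r + x)).
  replace (2 * atan u) with (atan u + atan u) by ring.
  rewrite cos_plus, sin_plus, cos_atan, sin_atan.
  set (c := sqrt (1 + u²)).
  assert (H1u : 0 < 1 + u*u) by nra.
  assert (Hs : c * c = 1 + u*u) by (unfold c; rewrite sqrt_sqrt; unfold Rsqr; lra).
  assert (Hcp : c <> 0) by (intro h; rewrite h in Hs; lra).
  replace (1 / c * (1 / c) - u / c * (u / c)) with ((1 - u*u)/(1+u*u)) by (rewrite <- Hs; field; auto).
  replace (u / c * (1 / c) + 1 / c * (u / c)) with (2*u/(1+u*u)) by (rewrite <- Hs; field; auto).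
  assert (E : (r+x)*(r+x) + y*y = 2*r*(r+x)) by nra.
  assert (E2 : (r+x)*(r+x) - y*y = 2*x*(r+x)) by nra.
  assert (Hrx0 : r + x <> 0) by lra.
  f_equal; unfold u.
  - replace ((1 - y / (r + x) * (y / (r + x))) / (1 + y / (r + x) * (y / (r + x)))) with
      (((r+x)*(r+x) - y*y) / ((r+x)*(r+x) + y*y)) by (field; split; auto; nra).
    rewrite E, E2. field. lra.
  - replace (2 * (y / (r + x)) / (1 + y / (r + x) * (y / (r + x)))) with
      (2 * y * (r + x) / ((r+x)*(r+x) + y*y)) by (field; split; auto; nra).
    rewrite E. field. lra.
Qed.
Lemma Rmono h dh a b : a <= b -> (forall x, a <= x <= b -> D h x (dh x)) ->
  (forall x, a <= x <= b -> 0 <= dh x) -> h a <= h b.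
Proof. intros Hab Hd Hp.
  destruct (MVT_gen h a b dh) as [c [Hc Hm]].
  - intros x Hx. rewrite Rmin_left, Rmax_right in Hx by lra. apply is_derive_Reals, Hd; lra.
  - intros x Hx. rewrite Rmin_left, Rmax_right in Hx by lra. eapply D_cont, Hd; lra.
  - rewrite Rmin_left, Rmax_right in Hc by lra. assert (0 <= dh c * (b - a)).
    { apply Rmult_le_pos. apply Hp; lra. lra. } lra. Qed.

Lemma CS_ineq p q r s : p * q + r * s <= sqrt (p^2 + r^2) * sqrt (q^2 + s^2).
Proof. rewrite <- sqrt_mult by nra.
  destruct (Rle_lt_dec (p*q+r*s) 0). eapply Rle_trans. exact r0. apply sqrt_pos.
  rewrite <- (sqrt_pow2 (p*q+r*s)) by lra. apply sqrt_le_1_alt.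
  assert (0 <= (p*s - r*q)^2) by apply pow2_ge_0. nra. Qed.

Lemma Ccomp (G dG : R -> Cplx) (K k : R -> R) a b :
  a <= b -> (forall x, a <= x <= b -> CD G x (dG x)) -> (forall x, a <= x <= b -> D K x (k x)) ->
  (forall x, a <= x <= b -> Cnorm (dG x) <= k x) -> Cnorm (Csub (G b) (G a)) <= K b - K a.
Proof. intros Hab HG HK Hk.
  set (Dd := Csub (G b) (G a)). set (n := Cnorm Dd).
  destruct (Cnorm_ge0 Dd) as [Hn|Hn]; fold n in Hn.
  - set (h := fun x => K x - (Re Dd * Re (G x) + Im Dd * Im (G x)) / n).
    assert (h a <= h b).
    { apply (Rmono h (fun x => k x - (Re Dd * Re (dG x) + Im Dd * Im (dG x)) / n)); auto.
      - intros x Hx. unfold h. apply D_minus. apply HK; auto.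
        unfold Rdiv. apply (D_ext (fun t => / n * (Re Dd * Re (G t) + Im Dd * Im (G t)))).
        intro; ring. eapply D_eq. apply D_scal. apply D_plus; apply D_scal; apply HG; auto. ring.
      - intros x Hx. assert (Re Dd * Re (dG x) + Im Dd * Im (dG x) <= n * Cnorm (dG x)).
        { apply CS_ineq. }
        assert ((Re Dd * Re (dG x) + Im Dd * Im (dG x)) / n <= Cnorm (dG x)).
        { apply Rmult_le_reg_l with n; auto.
          replace (n * ((Re Dd * Re (dG x) + Im Dd * Im (dG x)) / n)) with (Re Dd * Re (dG x) + Im Dd * Im (dG x)) by (field; lra). lra. }
        pose proof (Hk x Hx). lra. }
    unfold h in H.
    assert (Re Dd * Re (G b) + Im Dd * Im (G b) - (Re Dd * Re (G a) + Im Dd * Im (G a)) = n * n).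
    { unfold n. rewrite Cnorm_sq. unfold Dd. csimpl. ring. }
    assert ((Re Dd * Re (G b) + Im Dd * Im (G b))/n - (Re Dd * Re (G a) + Im Dd * Im (G a))/n = n).
    { unfold Rdiv. rewrite <- Rmult_minus_distr_r. rewrite H0. field. lra. }
    fold n. lra.
  - fold n. rewrite <- Hn. assert (K a <= K b). apply (Rmono K k); auto.
    intros. eapply Rle_trans. apply Cnorm_ge0. apply Hk; auto. lra. Qed.
Lemma Un_cv_unique u l1 l2 : Un_cv u l1 -> Un_cv u l2 -> l1 = l2.
Proof. apply UL_sequence. Qed.
Lemma C_cv_unique u l1 l2 : C_cv u l1 -> C_cv u l2 -> l1 = l2.
Proof. intros [a b] [c d]. apply Cplx_eq; eapply Un_cv_unique; eauto. Qed.
Lemma Clim_eq u l : C_cv u l -> Clim u = l.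
Proof. intro H. unfold Clim. apply (C_cv_unique u); auto.
  apply (epsilon_spec (inhabits (CR 0)) (fun l => C_cv u l)). exists l; auto. Qed.
Lemma Un_cv_shift u l n : Un_cv u l -> Un_cv (fun m => u (n + m)%nat) l.
Proof. intros H e He. destruct (H e He) as [N HN]. exists N. intros m Hm. apply HN. lia. Qed.
Lemma Un_cv_shift1 u l : Un_cv u l -> Un_cv (fun m => u (S m)) l.
Proof. intros H e He. destruct (H e He) as [N HN]. exists N. intros m Hm. apply HN. lia. Qed.
Lemma Un_cv_const c : Un_cv (fun _ => c) c.
Proof. intros e He. exists O. intros. unfold Rdist. rewrite Rminus_diag, Rabs_R0. lra. Qed.
Lemma Un_cv_ext u v l : (forall n, u n = v n) -> Un_cv u l -> Un_cv v l.
Proof. intros He H e Hx. destruct (H e Hx) as [N HN]. exists N. intros. rewrite <- He. auto. Qed.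

Lemma exp_series x : Un_cv (fun n => sum_f_R0 (fun i => / INR (fact i) * x ^ i) n) (exp x).
Proof. unfold exp. destruct (exist_exp x) as [l Hl]. simpl. exact Hl. Qed.

Lemma tail_bound (a b : nat -> R) A B n : (forall k, Rabs (a k) <= b k) ->
  Un_cv (fun m => sum_f_R0 a m) A -> Un_cv (fun m => sum_f_R0 b m) B ->
  Rabs (A - sum_f_R0 a n) <= B - sum_f_R0 b n.
Proof. intros Hab HA HB.
  assert (Hm : forall m, Rabs (sum_f_R0 a (n + m) - sum_f_R0 a n) <= sum_f_R0 b (n+m) - sum_f_R0 b n).
  { induction m. rewrite Nat.add_0_r. rewrite !Rminus_diag, Rabs_R0; lra.
    rewrite Nat.add_succ_r. simpl. specialize (Hab (S (n+m))).
    replace (sum_f_R0 a (n + m) + a (S (n + m)) - sum_f_R0 a n) with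
      ((sum_f_R0 a (n + m) - sum_f_R0 a n) + a (S (n + m))) by ring.
    eapply Rle_trans. apply Rabs_triang. lra. }
  apply Rabs_le. split.
  - apply Rle_cv_lim with (fun m => - (sum_f_R0 b (n+m) - sum_f_R0 b n)) (fun m => sum_f_R0 a (n + m) - sum_f_R0 a n).
    intro m. specialize (Hm m). apply Rabs_le_between in Hm. lra. 
    apply (Un_cv_ext (fun m => - (sum_f_R0 b (n+m)) + sum_f_R0 b n)). intro; ring.
    replace (- (B - sum_f_R0 b n)) with (-B + sum_f_R0 b n) by ring.
    apply CV_plus. apply (Un_cv_ext (fun m => -1 * sum_f_R0 b (n+m))). intro; ring.
    replace (-B) with (-1 * B) by ring. apply CV_mult. apply Un_cv_const. apply (Un_cv_shift (fun m => sum_f_R0 b m)); auto.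
    apply Un_cv_const.
    apply CV_minus. apply (Un_cv_shift (fun m => sum_f_R0 a m)); auto. apply Un_cv_const.
  - apply Rle_cv_lim with (fun m => sum_f_R0 a (n + m) - sum_f_R0 a n) (fun m => sum_f_R0 b (n+m) - sum_f_R0 b n).
    intro m. specialize (Hm m). apply Rabs_le_between in Hm. lra.
    apply CV_minus. apply (Un_cv_shift (fun m => sum_f_R0 a m)); auto. apply Un_cv_const.
    apply CV_minus. apply (Un_cv_shift (fun m => sum_f_R0 b m)); auto. apply Un_cv_const.
Qed.

Lemma Cnorm_Cpow z k : Cnorm (Cpow z k) = Cnorm z ^ k.
Proof. induction k; simpl. rewrite Cnorm_CR; apply Rabs_R1. rewrite Cnorm_mul, IHk. ring. Qed.

Fixpoint CPS (c : nat -> R) (z : Cplx) (n : nat) : Cplx :=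
  match n with O => CR (c O) | S m => Cadd (CPS c z m) (Cmul (CR (c (S m))) (Cpow z (S m))) end.
Lemma Re_CPS c z n : Re (CPS c z n) = sum_f_R0 (fun k => c k * Re (Cpow z k)) n.
Proof. induction n; simpl. unfold Re, CR; simpl; ring. rewrite <- IHn. unfold Re, Cadd, Cmul, CR; simpl. ring. Qed.
Lemma Im_CPS c z n : Im (CPS c z n) = sum_f_R0 (fun k => c k * Im (Cpow z k)) n.
Proof. induction n; simpl. unfold Im, CR; simpl; ring. rewrite <- IHn. unfold Im, Cadd, Cmul, CR; simpl. ring. Qed.

Definition cbound (c : nat -> R) := forall k, Rabs (c k) <= / INR (fact k).
Definition CSer c z := (Series (fun k => c k * Re (Cpow z k)), Series (fun k => c k * Im (Cpow z k))).

Lemma fact_pos k : 0 < INR (fact k).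
Proof. apply lt_0_INR. apply lt_O_fact. Qed.

Lemma term_bound c z k (w : R) : cbound c -> Rabs w <= Cnorm (Cpow z k) -> Rabs (c k * w) <= / INR (fact k) * Cnorm z ^ k.
Proof. intros Hc Hw. rewrite Rabs_mult. rewrite Cnorm_Cpow in Hw. apply Rmult_le_compat; auto; apply Rabs_pos. Qed.

Lemma ser_cv (a : nat -> R) x : (forall k, Rabs (a k) <= / INR (fact k) * x ^ k) ->
  Un_cv (fun n => sum_f_R0 a n) (Series a).
Proof. intro H. apply is_series_Reals. apply Series_correct. apply (@ex_series_le R_AbsRing R_CompleteNormedModule) with (fun k => / INR (fact k) * x ^ k).
  intro n. apply H. exists (exp x). apply is_series_Reals. apply exp_series. Qed.

Lemma CPS_cv c z : cbound c -> C_cv (CPS c z) (CSer c z).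
Proof. intro Hc. split; simpl.
  - apply (Un_cv_ext (fun n => sum_f_R0 (fun k => c k * Re (Cpow z k)) n)). intro; rewrite Re_CPS; auto.
    apply ser_cv with (Cnorm z). intro k. apply term_bound; auto. apply Re_le_Cnorm.
  - apply (Un_cv_ext (fun n => sum_f_R0 (fun k => c k * Im (Cpow z k)) n)). intro; rewrite Im_CPS; auto.
    apply ser_cv with (Cnorm z). intro k. apply term_bound; auto. apply Im_le_Cnorm. Qed.

Lemma Cnorm_i : Cnorm (0,1) = 1.
Proof. unfold Cnorm, Re, Im; cbn [fst snd]. replace (0^2 + 1^2) with 1 by ring. apply sqrt_1. Qed.
Lemma Cnorm_le_ReIm w : Cnorm w <= Rabs (Re w) + Rabs (Im w).
Proof. replace w with (Cadd (CR (Re w)) (Cmul (CR (Im w)) (0,1))) at 1 by (ceq; ring).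
  eapply Rle_trans. apply Cnorm_add. rewrite Cnorm_mul, !Cnorm_CR, Cnorm_i. lra. Qed.

Lemma CSer_tail c z n M : cbound c -> Cnorm z <= M ->
  Cnorm (Csub (CSer c z) (CPS c z n)) <= 2 * (exp M - sum_f_R0 (fun i => / INR (fact i) * M ^ i) n).
Proof. intros Hc HM. eapply Rle_trans. apply Cnorm_le_ReIm.
  assert (Hb : forall k, / INR (fact k) * Cnorm z ^ k <= / INR (fact k) * M ^ k).
  { intro k. apply Rmult_le_compat_l. left; apply Rinv_0_lt_compat, fact_pos. apply pow_incr. split; auto. apply Cnorm_ge0. }
  assert (H1 : Rabs (Re (Csub (CSer c z) (CPS c z n))) <= exp M - sum_f_R0 (fun i => / INR (fact i) * M ^ i) n).
  { rewrite Re_sub, Re_CPS. apply tail_bound. intro k. eapply Rle_trans. apply term_bound; auto. apply Re_le_Cnorm. auto.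
    simpl. apply ser_cv with (Cnorm z). intro k. apply term_bound; auto. apply Re_le_Cnorm. apply exp_series. }
  assert (H2 : Rabs (Im (Csub (CSer c z) (CPS c z n))) <= exp M - sum_f_R0 (fun i => / INR (fact i) * M ^ i) n).
  { rewrite Im_sub, Im_CPS. apply tail_bound. intro k. eapply Rle_trans. apply term_bound; auto. apply Im_le_Cnorm. auto.
    simpl. apply ser_cv with (Cnorm z). intro k. apply term_bound; auto. apply Im_le_Cnorm. apply exp_series. }
  lra. Qed.
Lemma CD_Cpow z t dz k : CD z t dz -> CD (fun s => Cpow (z s) (S k)) t (Cmul (CR (INR (S k))) (Cmul (Cpow (z t) k) dz)).
Proof. intro H. induction k.
  - apply (CD_ext (fun s => Cmul (z s) (CR 1))). intro; simpl; reflexivity.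
    eapply CD_eq. apply CD_mul. exact H. apply CD_const. simpl. ceq; ring.
  - apply (CD_ext (fun s => Cmul (z s) (Cpow (z s) (S k)))). intro; reflexivity.
    eapply CD_eq. apply CD_mul. exact H. exact IHk. rewrite (S_INR (S k)). simpl Cpow. ceq; ring. Qed.

Lemma CD_CPS c d z t dz n : (forall k, d k = INR (S k) * c (S k)) -> CD z t dz ->
  CD (fun s => CPS c (z s) (S n)) t (Cmul (CPS d (z t) n) dz).
Proof. intros Hd H. induction n.
  - simpl CPS. eapply CD_eq. apply CD_add. apply CD_const. apply CD_cmul. apply (CD_Cpow z t dz 0 H).
    rewrite Hd. simpl Cpow. ceq; ring.
  - apply (CD_ext (fun s => Cadd (CPS c (z s) (S n)) (Cmul (CR (c (S (S n)))) (Cpow (z s) (S (S n)))))).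
    intro; reflexivity.
    eapply CD_eq. apply CD_add. exact IHn. apply CD_cmul. apply (CD_Cpow z t dz (S n) H).
    simpl CPS. simpl Cpow. rewrite (Hd (S n)). ceq; ring. Qed.

Lemma exp_partial_cv M eps : 0 < eps -> exists N, forall m, (N <= m)%nat ->
  exp M - sum_f_R0 (fun i => / INR (fact i) * M ^ i) m < eps.
Proof. intro He. destruct (exp_series M eps He) as [N HN]. exists N. intros m Hm.
  specialize (HN m Hm). unfold Rdist in HN. apply Rabs_def2 in HN. lra. Qed.

Lemma CVU_common d z dz t0 r M (Hr : 0 < r) (p : Cplx -> R) : cbound d ->
  (forall w, Rabs (p w) <= Cnorm w) -> (forall w1 w2, p (Csub w1 w2) = p w1 - p w2) ->
  (forall t, Rabs (t - t0) < r -> Cnorm (z t) <= M /\ Cnorm (dz t) <= M) ->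
  CVU (fun n t => match n with O => 0 | S m => p (Cmul (CPS d (z t) m) (dz t)) end)
      (fun t => p (Cmul (CSer d (z t)) (dz t))) t0 (mkposreal r Hr).
Proof. intros Hd Hp Hlin Hb eps He.
  destruct (exp_partial_cv M (eps / (2 * (Rabs M + 1)))) as [N HN].
  { apply Rdiv_lt_0_compat; auto. pose proof (Rabs_pos M); lra. }
  exists (S N). intros n y Hn Hy. destruct n as [|m]. lia.
  unfold Boule in Hy; simpl in Hy. destruct (Hb y Hy) as [Hz Hdz].
  rewrite <- Hlin.
  replace (Csub (Cmul (CSer d (z y)) (dz y)) (Cmul (CPS d (z y) m) (dz y))) with
    (Cmul (Csub (CSer d (z y)) (CPS d (z y) m)) (dz y)) by (ceq; ring).
  eapply Rle_lt_trans. apply Hp. rewrite Cnorm_mul.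
  pose proof (CSer_tail d (z y) m M Hd Hz). specialize (HN m ltac:(lia)).
  assert (0 <= Cnorm (dz y)) by apply Cnorm_ge0.
  assert (0 <= M) by (eapply Rle_trans; [apply Cnorm_ge0|exact Hz]).
  rewrite Rabs_right in HN by lra.
  assert (Cnorm (Csub (CSer d (z y)) (CPS d (z y) m)) * Cnorm (dz y) <= 2 * (eps / (2 * (M + 1))) * M).
  { apply Rmult_le_compat; auto. apply Cnorm_ge0. lra. }
  apply Rle_lt_trans with (2 * (eps / (2 * (M + 1))) * M); auto.
  replace (2 * (eps / (2 * (M + 1))) * M) with (eps * (M / (M+1))) by (field; lra).
  assert (M / (M+1) < 1). { apply Rmult_lt_reg_r with (M+1). lra. field_simplify; lra. }
  nra. Qed.

Lemma CD_CSer c d z dz t0 r M : cbound c -> cbound d -> (forall k, d k = INR (S k) * c (S k)) -> 0 < r ->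
  (forall t, Rabs (t - t0) < r -> CD z t (dz t) /\ Cnorm (z t) <= M /\ Cnorm (dz t) <= M) ->
  CD (fun t => CSer c (z t)) t0 (Cmul (CSer d (z t0)) (dz t0)).
Proof. intros Hc Hd Hcd Hr H.
  assert (Hb : forall t, Rabs (t - t0) < r -> Cnorm (z t) <= M /\ Cnorm (dz t) <= M) by (intros; apply H; auto).
  split.
  - apply (CVU_derivable (fun n t => Re (CPS c (z t) n)) (fun n t => match n with O => 0 | S m => Re (Cmul (CPS d (z t) m) (dz t)) end)
      (fun t => Re (CSer c (z t))) (fun t => Re (Cmul (CSer d (z t)) (dz t))) t0 (mkposreal r Hr)).
    + exact (CVU_common d z dz t0 r M Hr Re Hd (fun w => Re_le_Cnorm w) (fun w1 w2 => Re_sub w1 w2) Hb).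
    + intros x Hx. exact (proj1 (CPS_cv c (z x) Hc)).
    + intros n x Hx. unfold Boule in Hx; simpl in Hx. destruct n.
      * simpl. apply D_const.
      * apply (CD_CPS c d z x (dz x) n Hcd). apply H; auto.
    + unfold Boule; simpl. rewrite Rminus_diag, Rabs_R0; auto.
  - apply (CVU_derivable (fun n t => Im (CPS c (z t) n)) (fun n t => match n with O => 0 | S m => Im (Cmul (CPS d (z t) m) (dz t)) end)
      (fun t => Im (CSer c (z t))) (fun t => Im (Cmul (CSer d (z t)) (dz t))) t0 (mkposreal r Hr)).
    + exact (CVU_common d z dz t0 r M Hr Im Hd (fun w => Im_le_Cnorm w) (fun w1 w2 => Im_sub w1 w2) Hb).
    + intros x Hx. exact (proj2 (CPS_cv c (z x) Hc)).
    + intros n x Hx. unfold Boule in Hx; simpl in Hx. destruct n.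
      * simpl. apply D_const.
      * apply (CD_CPS c d z x (dz x) n Hcd). apply H; auto.
    + unfold Boule; simpl. rewrite Rminus_diag, Rabs_R0; auto.
Qed.
Lemma exp_le x y : x <= y -> exp x <= exp y.
Proof. intros [H|H]. left; apply exp_increasing; auto. subst; lra. Qed.

Definition c_exp k := / INR (fact k).
Definition c_es k := / INR (fact (S k)).
Definition c_ei k := match k with O => 0 | S _ => / (INR k * INR (fact k)) end.

Lemma fact_ge1 k : 1 <= INR (fact k).
Proof. apply (le_INR 1). apply lt_O_fact. Qed.
Lemma inv_fact_le k m : (k <= m)%nat -> / INR (fact m) <= / INR (fact k).
Proof. intro H. apply Rinv_le_contravar. apply fact_pos. apply le_INR. apply fact_le; auto. Qed.

Lemma cb_exp : cbound c_exp.
Proof. intro k. unfold c_exp. rewrite Rabs_right. lra. left; apply Rinv_0_lt_compat, fact_pos. Qed.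
Lemma cb_es : cbound c_es.
Proof. intro k. unfold c_es. rewrite Rabs_right. apply inv_fact_le; lia. left; apply Rinv_0_lt_compat, fact_pos. Qed.
Lemma cb_ei : cbound c_ei.
Proof. intro k. destruct k; unfold c_ei. rewrite Rabs_R0. left; apply Rinv_0_lt_compat, fact_pos.
  pose proof (fact_ge1 (S k)). pose proof (fact_pos (S k)). assert (1 <= INR (S k)) by (apply (le_INR 1); lia).
  rewrite Rabs_right. apply Rinv_le_contravar. lra. nra. left; apply Rinv_0_lt_compat; nra. Qed.
Lemma rel_exp k : c_exp k = INR (S k) * c_exp (S k).
Proof. unfold c_exp. change (fact (S k)) with (S k * fact k)%nat. rewrite mult_INR.
  pose proof (fact_pos k). pose proof (lt_0_INR (S k) ltac:(lia)). field; lra. Qed.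
Lemma rel_ei k : c_es k = INR (S k) * c_ei (S k).
Proof. unfold c_es, c_ei. pose proof (fact_pos (S k)). pose proof (lt_0_INR (S k) ltac:(lia)). field; lra. Qed.

Lemma CSer_0 c : cbound c -> CSer c (CR 0) = CR (c O).
Proof. intro Hc. apply (C_cv_unique (CPS c (CR 0))). apply CPS_cv; auto.
  assert (forall n, CPS c (CR 0) n = CR (c O)).
  { induction n. reflexivity. simpl. rewrite IHn. ceq; ring. }
  split. apply (Un_cv_ext (fun _ => c O)). intro; rewrite H; reflexivity. apply Un_cv_const.
  apply (Un_cv_ext (fun _ => 0)). intro; rewrite H; reflexivity. apply Un_cv_const. Qed.

Lemma Ei0_eq z : Ei0 z = CSer c_ei z.
Proof. unfold Ei0. apply Clim_eq.
  assert (forall n, Ei0_partial z n = CPS c_ei z n).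
  { induction n. reflexivity. simpl. rewrite IHn. f_equal. unfold Cdiv.
    rewrite Cinv_CR. unfold c_ei. ceq; ring. pose proof (fact_pos (S n)). pose proof (lt_0_INR (S n) ltac:(lia)).
    apply Rgt_not_eq. apply Rmult_lt_0_compat; auto. }
  destruct (CPS_cv c_ei z cb_ei) as [H1 H2]. split.
  apply (Un_cv_ext (fun n => Re (CPS c_ei z n))); auto. intro; rewrite H; auto.
  apply (Un_cv_ext (fun n => Im (CPS c_ei z n))); auto. intro; rewrite H; auto. Qed.

Lemma Ei0_0 : Ei0 (CR 0) = CR 0.
Proof. rewrite Ei0_eq, CSer_0. reflexivity. apply cb_ei. Qed.

Lemma C_cv_affine u l a b : C_cv u l -> C_cv (fun n => Cadd a (Cmul b (u n))) (Cadd a (Cmul b l)).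
Proof. intros [H1 H2]; split; csimpl.
  - apply CV_plus. apply Un_cv_const. apply CV_minus; apply CV_mult; auto; apply Un_cv_const.
  - apply CV_plus. apply Un_cv_const. apply CV_plus; apply CV_mult; auto; apply Un_cv_const. Qed.

Lemma EXPS_rel z : CSer c_exp z = Cadd (CR 1) (Cmul z (CSer c_es z)).
Proof. apply (C_cv_unique (fun n => CPS c_exp z (S n))).
  - destruct (CPS_cv c_exp z cb_exp) as [H1 H2]. split; apply (Un_cv_shift1 (fun n => _ (CPS c_exp z n))); auto.
  - assert (forall n, Cadd (CR 1) (Cmul z (CPS c_es z n)) = CPS c_exp z (S n)).
    { induction n. simpl. unfold c_es, c_exp. simpl. ceq; field.
      change (CPS c_exp z (S (S n))) with (Cadd (CPS c_exp z (S n)) (Cmul (CR (c_exp (S (S n)))) (Cpow z (S (S n))))).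
      rewrite <- IHn. simpl CPS. simpl Cpow. unfold c_es, c_exp. ceq; ring. }
    destruct (C_cv_affine _ _ (CR 1) z (CPS_cv c_es z cb_es)) as [H1 H2]. split.
    apply (Un_cv_ext (fun n => Re (Cadd (CR 1) (Cmul z (CPS c_es z n))))); auto. intro; rewrite H; auto.
    apply (Un_cv_ext (fun n => Im (Cadd (CR 1) (Cmul z (CPS c_es z n))))); auto. intro; rewrite H; auto. Qed.

Lemma Cnorm_mulR w s : Cnorm (Cmul w (CR s)) = Cnorm w * Rabs s.
Proof. rewrite Cnorm_mul, Cnorm_CR; auto. Qed.
Lemma CD_lin w t : CD (fun s => Cmul w (CR s)) t w.
Proof. eapply CD_eq. apply CD_cmul. apply CD_CR. apply D_id. ceq; ring. Qed.

Lemma lin_bound w t0 t : Rabs (t - t0) < 1 -> Cnorm (Cmul w (CR t)) <= Cnorm w * (Rabs t0 + 2) /\ Cnorm w <= Cnorm w * (Rabs t0 + 2).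
Proof. intro H. rewrite Cnorm_mulR. pose proof (Cnorm_ge0 w). pose proof (Rabs_pos t0).
  split. apply Rmult_le_compat_l; auto. pose proof (Rabs_triang_inv t t0). lra.
  pose proof (Rabs_pos t0). nra. Qed.

Lemma CD_CSer_lin c d w t0 : cbound c -> cbound d -> (forall k, d k = INR (S k) * c (S k)) ->
  CD (fun t => CSer c (Cmul w (CR t))) t0 (Cmul (CSer d (Cmul w (CR t0))) w).
Proof. intros. apply (CD_CSer c d (fun t => Cmul w (CR t)) (fun _ => w) t0 1 (Cnorm w * (Rabs t0 + 2))); auto. lra.
  intros t Ht. split. apply CD_lin. apply lin_bound; auto. Qed.

Lemma CD_const_fun G a b : a <= b -> (forall x, a <= x <= b -> CD G x (CR 0)) -> G b = G a.
Proof. intros Hab H. assert (Cnorm (Csub (G b) (G a)) <= (fun _ => 0) b - (fun _ => 0) a).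
  apply (Ccomp G (fun _ => CR 0) (fun _ => 0) (fun _ => 0)); auto. intros; apply D_const.
  intros; rewrite Cnorm_CR, Rabs_R0; lra.
  assert (Cnorm (Csub (G b) (G a)) = 0) by (pose proof (Cnorm_ge0 (Csub (G b) (G a))); lra).
  apply Cnorm_eq0 in H1. apply Cplx_eq. apply (f_equal Re) in H1. csimpl. lra.
  apply (f_equal Im) in H1. csimpl. lra. Qed.

Lemma EXPS_Cexp w : CSer c_exp w = Cexp w.
Proof. set (g := fun t => Cmul (CSer c_exp (Cmul w (CR t))) (Cexp (Copp (Cmul w (CR t))))).
  assert (g 1 = g 0).
  { apply CD_const_fun. lra. intros x Hx. unfold g. eapply CD_eq. apply CD_mul.
    apply (CD_CSer_lin c_exp c_exp); auto using cb_exp, rel_exp.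
    apply CD_exp. apply CD_opp. apply CD_lin. ceq; ring. }
  unfold g in H. replace (Cmul w (CR 0)) with (CR 0) in H by (ceq; ring).
  rewrite CSer_0 in H by apply cb_exp. replace (Copp (CR 0)) with (CR 0) in H by (ceq; ring).
  rewrite Cexp_0 in H. replace (Cmul w (CR 1)) with w in H by (ceq; ring).
  replace (CSer c_exp w) with (Cmul (Cmul (CSer c_exp w) (Cexp (Copp w))) (Cexp w)).
  rewrite H. unfold c_exp. simpl. ceq; field.
  replace (Cmul (Cmul (CSer c_exp w) (Cexp (Copp w))) (Cexp w)) with
    (Cmul (CSer c_exp w) (Cmul (Cexp w) (Cexp (Copp w)))) by (ceq; ring).
  rewrite Cexp_opp. ceq; ring. Qed.

Lemma ES_rel z : Cadd (CR 1) (Cmul z (CSer c_es z)) = Cexp z.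
Proof. rewrite <- EXPS_Cexp, EXPS_rel. auto. Qed.

Lemma CD_Ei0 z dz t0 r M : 0 < r ->
  (forall t, Rabs (t - t0) < r -> CD z t (dz t) /\ Cnorm (z t) <= M /\ Cnorm (dz t) <= M) ->
  CD (fun t => Ei0 (z t)) t0 (Cmul (CSer c_es (z t0)) (dz t0)).
Proof. intros. apply (CD_ext (fun t => CSer c_ei (z t))). intro; rewrite Ei0_eq; auto.
  apply (CD_CSer c_ei c_es z dz t0 r M); auto using cb_ei, cb_es, rel_ei. Qed.

Lemma Cexp_sub1_bound w : Cnorm (Csub (Cexp w) (CR 1)) <= Cnorm w * exp (Rmax 0 (Re w)).
Proof. set (m := Cnorm w * exp (Rmax 0 (Re w))).
  assert (Cnorm (Csub (Cexp (Cmul w (CR 1))) (Cexp (Cmul w (CR 0)))) <= (fun s => m * s) 1 - (fun s => m * s) 0).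
  { apply (Ccomp (fun s => Cexp (Cmul w (CR s))) (fun s => Cmul (Cexp (Cmul w (CR s))) w) (fun s => m * s) (fun _ => m)).
    lra. intros; apply CD_exp, CD_lin. intros. eapply D_eq. apply D_scal, D_id. ring.
    intros x Hx. rewrite Cnorm_mul, Cnorm_Cexp. unfold m. rewrite Rmult_comm. apply Rmult_le_compat_l. apply Cnorm_ge0.
    apply exp_le. csimpl. replace (fst w * x - snd w * 0) with (fst w * x) by ring.
    destruct (Rle_dec 0 (fst w)). rewrite Rmax_right by auto. nra. rewrite Rmax_left by lra. nra. }
  replace (Cmul w (CR 1)) with w in H by (ceq; ring). replace (Cmul w (CR 0)) with (CR 0) in H by (ceq; ring).
  rewrite Cexp_0 in H. lra. Qed.

Lemma ES_bound w : Cnorm (CSer c_es w) <= exp (Rmax 0 (Re w)).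
Proof. destruct (Req_dec (Cnorm w) 0) as [H|H].
  - apply Cnorm_eq0 in H. subst. rewrite CSer_0 by apply cb_es.
    replace (c_es 0) with 1 by (unfold c_es; simpl; field).
    rewrite Cnorm_CR, Rabs_R1. unfold Re, CR; simpl. rewrite Rmax_left by lra. rewrite exp_0. lra.
  - pose proof (Cexp_sub1_bound w). rewrite <- ES_rel in H0.
    replace (Csub (Cadd (CR 1) (Cmul w (CSer c_es w))) (CR 1)) with (Cmul w (CSer c_es w)) in H0 by (ceq; ring).
    rewrite Cnorm_mul in H0. pose proof (Cnorm_ge0 w). apply Rmult_le_reg_l with (Cnorm w). lra. auto. Qed.

Lemma max_scale a x t : 0 <= x <= t -> Rmax 0 (a * x) <= Rmax 0 a * t.
Proof. intro H. unfold Rmax. destruct (Rle_dec 0 (a*x)); destruct (Rle_dec 0 a); nra. Qed.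

Lemma Ei0_bound b t : 0 <= t -> Cnorm (Ei0 (Cmul b (CR t))) <= Cnorm b * t * exp (Rmax 0 (Re b) * t).
Proof. intro Ht. set (m := Cnorm b * exp (Rmax 0 (Re b) * t)).
  assert (Cnorm (Csub (Ei0 (Cmul b (CR t))) (Ei0 (Cmul b (CR 0)))) <= (fun s => m * s) t - (fun s => m * s) 0).
  { apply (Ccomp (fun s => Ei0 (Cmul b (CR s))) (fun s => Cmul (CSer c_es (Cmul b (CR s))) b) (fun s => m * s) (fun _ => m)).
    auto. intros x Hx. apply (CD_Ei0 (fun s => Cmul b (CR s)) (fun _ => b) x 1 (Cnorm b * (Rabs x + 2))). lra.
    intros; split. apply CD_lin. apply lin_bound; auto.
    intros. eapply D_eq. apply D_scal, D_id. ring.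
    intros x Hx. rewrite Cnorm_mul. unfold m. rewrite Rmult_comm. apply Rmult_le_compat_l. apply Cnorm_ge0.
    eapply Rle_trans. apply ES_bound. apply exp_le. csimpl. replace (fst b * x - snd b * 0) with (fst b * x) by ring.
    apply max_scale; lra. }
  replace (Cmul b (CR 0)) with (CR 0) in H by (ceq; ring). rewrite Ei0_0 in H.
  replace (Csub (Ei0 (Cmul b (CR t))) (CR 0)) with (Ei0 (Cmul b (CR t))) in H by (ceq; ring). unfold m in H. lra. Qed.
Lemma Cpow_CR x k : Cpow (CR x) k = CR (x ^ k).
Proof. induction k; simpl. reflexivity. rewrite IHk. ceq; ring. Qed.
Lemma Im_CSer_real c x : cbound c -> Im (CSer c (CR x)) = 0.
Proof. intro Hc. destruct (CPS_cv c (CR x) Hc) as [_ H2].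
  assert (forall n, Im (CPS c (CR x) n) = 0).
  { assert (forall k, Im (Cpow (CR x) k) = 0) by (intro; rewrite Cpow_CR; reflexivity).
    intro n. rewrite Im_CPS. induction n; simpl sum_f_R0; rewrite ?H. ring. rewrite IHn. ring. }
  apply (Un_cv_unique (fun n => Im (CPS c (CR x) n))); auto.
  apply (Un_cv_ext (fun _ => 0)). intro; rewrite H; auto. apply Un_cv_const. Qed.
Lemma Im_Ei0_real x : Im (Ei0 (CR x)) = 0.
Proof. rewrite Ei0_eq. apply Im_CSer_real, cb_ei. Qed.

Definition eR (u : R) : R := Re (Ei0 (CR (- u))).
Definition esR (u : R) : R := Re (CSer c_es (CR (- u))).

Lemma CD_negid t : CD (fun s => CR (- s)) t (CR (-1)).
Proof. apply CD_CR. eapply D_eq. apply D_opp, D_id. auto. Qed.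

Lemma D_eR u : D eR u (- esR u).
Proof. destruct (CD_Ei0 (fun s => CR (- s)) (fun _ => CR (-1)) u 1 (Rabs u + 2)) as [H _]. lra.
  intros t Ht. split. apply CD_negid. rewrite !Cnorm_CR. rewrite Rabs_Ropp.
  pose proof (Rabs_triang_inv t u). rewrite Rabs_m1. pose proof (Rabs_pos u). lra.
  unfold eR, esR. eapply D_eq. exact H. csimpl. ring. Qed.

Lemma esR_rel u : 1 + (- u) * esR u = exp (- u).
Proof. pose proof (ES_rel (CR (- u))). apply (f_equal Re) in H. unfold esR.
  unfold Cexp in H. csimpl. rewrite cos_0 in H. rewrite <- (Rmult_1_r (exp (-u))). rewrite <- H. ring. Qed.
Lemma esR_0 : esR 0 = 1.
Proof. unfold esR. rewrite Ropp_0, CSer_0 by apply cb_es. unfold c_es; simpl. csimpl. field. Qed.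
Lemma eR_0 : eR 0 = 0.
Proof. unfold eR. rewrite Ropp_0, Ei0_0. reflexivity. Qed.
Lemma esR_pos u : 0 < u -> esR u = (1 - exp (- u)) / u.
Proof. intro H. pose proof (esR_rel u). field_simplify_eq; lra. Qed.

Lemma D_sum (f : nat -> R -> R) df u k : (forall j, D (f j) u (df j)) ->
  D (fun v => sum_f_R0 (fun j => f j v) k) u (sum_f_R0 df k).
Proof. intro H. induction k; simpl. apply H. apply D_plus; auto. Qed.

Lemma exp_pow a n : exp (INR n * a) = exp a ^ n.
Proof. induction n. simpl. rewrite Rmult_0_l, exp_0. reflexivity.
  rewrite S_INR, Rmult_plus_distr_r, exp_plus, IHn, Rmult_1_l. rewrite <- tech_pow_Rmult. apply Rmult_comm. Qed.

Lemma bernoulli x n : -1 <= x -> 1 + INR n * x <= (1 + x) ^ n.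
Proof. intro H. induction n. simpl; lra. rewrite S_INR. simpl.
  assert (0 <= 1 + x) by lra. assert (0 <= INR n) by apply pos_INR.
  assert (0 <= INR n * (x * x)) by (apply Rmult_le_pos; nra).
  assert ((1+x)*(1 + INR n * x) <= (1+x)*(1+x)^n) by (apply Rmult_le_compat_l; lra).
  nra. Qed.

Lemma key_ineq u n : (1 <= n)%nat -> 0 <= u <= INR n ->
  0 <= exp (- u) - (1 - u / INR n) ^ n <= u * u * exp (- u) / INR n.
Proof. intros Hn Hu. assert (HN : 1 <= INR n) by (apply (le_INR 1); auto).
  set (N := INR n) in *. set (v := u / N).
  assert (Hv : u = N * v) by (unfold v; field; lra).
  assert (Hv0 : 0 <= v <= 1). { split. unfold v. apply Rmult_le_pos; [lra|]. left; apply Rinv_0_lt_compat; lra.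
    apply Rmult_le_reg_l with N. lra. rewrite <- Hv. lra. }
  assert (He : exp (- u) = exp (- v) ^ n) by (rewrite <- exp_pow; f_equal; unfold N in Hv; rewrite Hv; ring).
  assert (He2 : exp u = exp v ^ n) by (rewrite <- exp_pow; f_equal; unfold N in Hv; rewrite Hv; ring).
  assert (E1 : 1 - v <= exp (- v)) by (pose proof (exp_ineq1_le (-v)); lra).
  assert (E2 : 1 + v <= exp v) by (apply exp_ineq1_le).
  split.
  - rewrite He. assert ((1-v)^n <= exp (-v) ^ n) by (apply pow_incr; lra). lra.
  - assert (B1 : (1 + v) ^ n <= exp u) by (rewrite He2; apply pow_incr; lra).
    assert (B2 : 1 + N * (- (v*v)) <= (1 + - (v*v)) ^ n) by (apply bernoulli; nra).
    assert (B3 : (1 + - (v*v)) ^ n = (1+v)^n * (1-v)^n) by (rewrite <- Rpow_mult_distr; f_equal; ring).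
    assert (B4 : 0 <= (1-v)^n) by (apply pow_le; lra).
    assert (B5 : 1 - N * (v * v) <= exp u * (1 - v)^n) by nra.
    assert (B6 : exp (-u) * exp u = 1) by (rewrite <- exp_plus; replace (-u+u) with 0 by ring; apply exp_0).
    assert (B7 : exp (-u) * (1 - N*(v*v)) <= (1-v)^n).
    { replace ((1-v)^n) with (exp (-u) * (exp u * (1-v)^n)) by (rewrite <- Rmult_assoc, B6; ring).
      apply Rmult_le_compat_l. left; apply exp_pos. auto. }
    replace (u * u * exp (- u) / N) with (exp (-u) * (N * (v*v))) by (rewrite Hv; field; lra).
    lra. Qed.

Lemma geom_sum q m : q <> 1 -> sum_f_R0 (fun j => q ^ j) m = (1 - q ^ S m) / (1 - q).
Proof. apply tech3. Qed.

Lemma Wd_bound m u : 0 <= u <= INR (S m) ->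
  Rabs (esR u - / INR (S m) * sum_f_R0 (fun j => (1 - u / INR (S m)) ^ j) m) <= u * exp (- u) / INR (S m).
Proof. intro Hu. set (N := INR (S m)) in *. assert (HN : 1 <= N) by (apply (le_INR 1); lia).
  destruct (Req_dec u 0) as [H0|H0].
  - subst u. rewrite esR_0. replace (1 - 0 / N) with 1 by (field; lra).
    rewrite (sum_eq _ (fun _ => 1)) by (intros; apply pow1). rewrite sum_cte. unfold N. rewrite S_INR.
    replace (1 - / (INR m + 1) * (1 * (INR m + 1))) with 0 by (field; pose proof (pos_INR m); lra).
    rewrite Rabs_R0. rewrite Rmult_0_l. unfold Rdiv. lra.
  - assert (Hup : 0 < u) by lra. rewrite esR_pos by auto.
    rewrite geom_sum. 2: { intro h. assert (u / N = 0) by lra. apply H0. apply Rmult_eq_reg_r with (/N). lra.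
      apply Rgt_not_eq, Rinv_0_lt_compat; lra. }
    replace (1 - (1 - u / N)) with (u / N) by ring.
    replace ((1 - exp (- u)) / u - / N * ((1 - (1 - u / N) ^ S m) / (u / N))) with
      (- (exp (-u) - (1 - u/N) ^ S m) / u) by (field; lra).
    pose proof (key_ineq u (S m) ltac:(lia) Hu). fold N in H.
    rewrite Rabs_div by lra. rewrite Rabs_Ropp. rewrite (Rabs_right u) by lra.
    rewrite Rabs_right by lra. apply Rmult_le_reg_r with u; auto.
    replace ((exp (- u) - (1 - u / N) ^ S m) / u * u) with (exp (- u) - (1 - u / N) ^ S m) by (field; lra).
    replace (u * exp (- u) / N * u) with (u * u * exp (- u) / N) by (field; lra). lra. Qed.
Definition Rs m u := sum_f_R0 (fun j => (1 - u / INR (S m)) ^ S j / INR (S j)) m.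

Lemma sum_scal (f : nat -> R) c k : sum_f_R0 (fun j => c * f j) k = c * sum_f_R0 f k.
Proof. induction k; simpl. auto. rewrite IHk. ring. Qed.

Lemma D_Rs m u : D (Rs m) u (- / INR (S m) * sum_f_R0 (fun j => (1 - u / INR (S m)) ^ j) m).
Proof. set (N := INR (S m)). assert (HN : 0 < N) by (apply lt_0_INR; lia).
  unfold Rs. fold N.
  eapply D_eq. apply (D_sum (fun j v => (1 - v / N) ^ S j / INR (S j)) (fun j => - / N * (1 - u / N) ^ j)).
  - intro j. apply (D_ext (fun v => / INR (S j) * (1 - v / N) ^ S j)). intro; cbv beta; unfold Rdiv; ring.
    eapply D_eq. apply D_scal. apply (D_comp (fun x => x ^ S j) (fun v => 1 - v / N)).
    apply (D_ext (fun v => 1 - / N * v)). intro; cbv beta; unfold Rdiv; ring. apply D_minus. apply D_const. apply D_scal, D_id.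
    apply derivable_pt_lim_pow. simpl pred. pose proof (lt_0_INR (S j) ltac:(lia)). field. split; lra.
  - apply sum_scal. Qed.

Lemma Rcomp W dW K k a b : a <= b -> (forall x, a <= x <= b -> D W x (dW x)) -> (forall x, a <= x <= b -> D K x (k x)) ->
  (forall x, a <= x <= b -> Rabs (dW x) <= k x) -> Rabs (W b - W a) <= K b - K a.
Proof. intros Hab HW HK Hk. apply Rabs_le. split.
  - assert (K a - W a * (-1) <= K b - W b * (-1)).
    { apply (Rmono (fun x => K x - W x * (-1)) (fun x => k x - dW x * (-1))); auto.
      intros. eapply D_eq. apply D_minus. auto. eapply D_eq. apply D_mult. auto. apply D_const. reflexivity. cbv beta; ring.
      intros. pose proof (Hk x H). apply Rabs_le_between in H0. lra. } lra.
  - assert (K a - W a <= K b - W b).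
    { apply (Rmono (fun x => K x - W x) (fun x => k x - dW x)); auto.
      intros. apply D_minus; auto. intros. pose proof (Hk x H). apply Rabs_le_between in H0. lra. } lra. Qed.

Definition Wf m u := - eR u + Rs m u - Rs m 0.

Lemma Rs_0 m : Rs m 0 = sum_f_R0 (fun k => / INR (S k)) m.
Proof. unfold Rs. apply sum_eq. intros. replace (1 - 0 / INR (S m)) with 1. rewrite pow1. unfold Rdiv; ring.
  field. apply not_0_INR; lia. Qed.
Lemma Rs_N m : Rs m (INR (S m)) = 0.
Proof. unfold Rs. replace (1 - INR (S m) / INR (S m)) with 0 by (field; apply not_0_INR; lia).
  rewrite (sum_eq _ (fun _ => 0)). 2: { intros. simpl. unfold Rdiv; ring. }
  rewrite sum_cte. ring. Qed.

Lemma W_bound m : Rabs (- eR (INR (S m)) - sum_f_R0 (fun k => / INR (S k)) m) <= / INR (S m).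
Proof. set (N := INR (S m)). assert (HN : 1 <= N) by (apply (le_INR 1); lia).
  set (K := fun u => (1 - (1 + u) * exp (- u)) / N).
  assert (Rabs (Wf m N - Wf m 0) <= K N - K 0).
  { apply (Rcomp (Wf m) (fun u => esR u - / N * sum_f_R0 (fun j => (1 - u / N) ^ j) m) K (fun u => u * exp (- u) / N)).
    lra.
    - intros x Hx. unfold Wf. eapply D_eq. apply D_minus. apply D_plus. apply D_opp. apply D_eR. apply D_Rs. apply D_const.
      fold N. ring.
    - intros x Hx. unfold K. unfold Rdiv. eapply D_eq. apply (D_ext (fun u => / N * (1 - (1 + u) * exp (- u)))). intro; cbv beta; ring.
      apply D_scal. apply D_minus. apply D_const. apply D_mult. apply D_plus. apply D_const. apply D_id.
      apply D_exp. apply D_opp, D_id. cbv beta; ring.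
    - intros x Hx. apply Wd_bound. auto. }
  unfold Wf in H. rewrite Rs_N, Rs_0, eR_0 in H.
  replace (- eR N + 0 - sum_f_R0 (fun k : nat => / INR (S k)) m - (- 0 + sum_f_R0 (fun k : nat => / INR (S k)) m - sum_f_R0 (fun k : nat => / INR (S k)) m))
    with (- eR N - sum_f_R0 (fun k : nat => / INR (S k)) m) in H by ring.
  eapply Rle_trans. apply H. unfold K.
  replace (1 - (1 + 0) * exp (- 0)) with 0 by (rewrite Ropp_0, exp_0; ring).
  assert (0 < (1 + N) * exp (- N)) by (apply Rmult_lt_0_compat; [lra|apply exp_pos]).
  unfold Rdiv. rewrite Rmult_0_l, Rminus_0_r. rewrite <- (Rmult_1_l (/ N)) at 2.
  apply Rmult_le_compat_r. left; apply Rinv_0_lt_compat; lra. lra. Qed.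

Definition GR T := - eR T - ln T.

Lemma D_GR T : 0 < T -> D GR T (- exp (- T) / T).
Proof. intro H. unfold GR. eapply D_eq. apply D_minus. apply D_opp, D_eR. apply derivable_pt_lim_ln; auto.
  rewrite esR_pos by auto. field; lra. Qed.

Lemma GR_decr a b : 0 < a -> a <= b -> GR b <= GR a.
Proof. intros Ha Hab. assert (- GR a <= - GR b).
  { apply (Rmono (fun x => - GR x) (fun x => exp (- x) / x)); auto.
    intros. eapply D_eq. apply D_opp, D_GR. lra. field; lra.
    intros. apply Rlt_le, Rdiv_lt_0_compat. apply exp_pos. lra. } lra. Qed.

Lemma GR_lower T : 1 <= T -> GR 1 - 1 <= GR T.
Proof. intro H. assert (GR 1 - exp (- 1) <= GR T - exp (- T)).
  { apply (Rmono (fun x => GR x - exp (- x)) (fun x => - exp (- x) / x + exp (- x))); auto.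
    intros. eapply D_eq. apply D_minus. apply D_GR. lra. apply D_exp, D_opp, D_id. ring.
    intros. assert (0 < exp (- x)) by apply exp_pos.
    assert (exp (- x) / x <= exp (- x)). { unfold Rdiv. rewrite <- (Rmult_1_r (exp (- x))) at 2.
      apply Rmult_le_compat_l. lra. rewrite <- Rinv_1. apply Rinv_le_contravar; lra. } lra. }
  pose proof (exp_pos (- T)). assert (exp (-1) <= 1). { rewrite <- exp_0. apply exp_le. lra. } lra. Qed.

Lemma GR_cv : { g | Un_cv (fun m => GR (INR (S m))) g }.
Proof. destruct (growing_cv (fun m => - GR (INR (S m)))) as [l Hl].
  - intro n. assert (GR (INR (S (S n))) <= GR (INR (S n))). apply GR_decr. apply lt_0_INR; lia. apply le_INR; lia. lra.
  - exists (1 - GR 1). intros x [n Hn]. subst. assert (GR 1 - 1 <= GR (INR (S n))). apply GR_lower.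
    apply (le_INR 1); lia. lra.
  - exists (- l). apply (Un_cv_ext (fun m => -1 * (- GR (INR (S m))))). intro; cbv beta; ring.
    replace (-l) with (-1 * l) by ring. apply CV_mult. apply Un_cv_const. auto. Qed.

Definition gR := proj1_sig GR_cv.

Lemma euler_gamma_eq : euler_gamma = gR.
Proof. assert (Hs : Un_cv (fun n => sum_f_R0 (fun k => / INR (S k)) n - ln (INR (S n))) gR).
  { unfold gR. destruct GR_cv as [g Hg]. cbn [proj1_sig]. intros e He.
    destruct (Hg (e/2)) as [N1 HN1]. lra.
    destruct (INR_unbounded (2 / e)) as [N2 HN2].
    exists (N1 + N2)%nat. intros n Hn. specialize (HN1 n ltac:(lia)). pose proof (W_bound n).
    unfold GR in HN1. unfold Rdist in *.
    assert (/ INR (S n) < e / 2).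
    { assert (INR N2 <= INR (S n)) by (apply le_INR; lia). assert (0 < INR (S n)) by (apply lt_0_INR; lia).
      assert (2 / e < INR (S n)) by lra. assert (0 < 2 / e) by (apply Rdiv_lt_0_compat; lra).
      replace (e / 2) with (/ (2 / e)) by (field; lra). apply Rinv_lt_contravar; auto. nra. }
    replace (sum_f_R0 (fun k : nat => / INR (S k)) n - ln (INR (S n)) - g) with
      ((- eR (INR (S n)) - ln (INR (S n)) - g) - (- eR (INR (S n)) - sum_f_R0 (fun k : nat => / INR (S k)) n)) by ring.
    eapply Rle_lt_trans. apply Rabs_triang. rewrite Rabs_Ropp. lra. }
  unfold euler_gamma. apply (Un_cv_unique (fun n => sum_f_R0 (fun k => / INR (S k)) n - ln (INR (S n)))); auto.
  apply (epsilon_spec (inhabits 0) (fun g => Un_cv (fun n => sum_f_R0 (fun k => / INR (S k)) n - ln (INR (S n))) g)).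
  exists gR; auto. Qed.

Lemma GR_lim e : 0 < e -> exists M, forall T, M < T -> Rabs (GR T - gR) < e.
Proof. intro He. unfold gR. destruct GR_cv as [g Hg]. cbn [proj1_sig].
  destruct (Hg e He) as [N HN]. exists (INR (S N)). intros T HT.
  assert (Hup : GR T <= GR (INR (S N))) by (apply GR_decr; [apply lt_0_INR; lia| lra]).
  assert (Hlow : g <= GR T).
  { destruct (INR_unbounded T) as [M HM].
    apply Rle_cv_lim with (Un := fun k => GR (INR (S (M + k)))) (Vn := fun _ => GR T).
    intro k. pose proof (lt_0_INR (S N) ltac:(lia)). apply GR_decr. lra. assert (INR M <= INR (S (M + k))) by (apply le_INR; lia). lra.
    apply (Un_cv_shift (fun m => GR (INR (S m)))); auto. apply Un_cv_const. }
  specialize (HN N ltac:(lia)). unfold Rdist in HN. apply Rabs_def2 in HN. rewrite Rabs_right; lra. Qed.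

Lemma gamma_lim e : 0 < e -> exists M, forall T, M < T -> Rabs (euler_gamma + ln T + eR T) < e.
Proof. intro He. destruct (GR_lim e He) as [M HM]. exists M. intros T HT. rewrite euler_gamma_eq.
  replace (gR + ln T + eR T) with (- (GR T - gR)) by (unfold GR; ring). rewrite Rabs_Ropp. auto. Qed.
Lemma Clog_CR T : 0 < T -> Clog (CR T) = CR (ln T).
Proof. intro H. unfold Clog, Carg. rewrite Cnorm_CR, Rabs_right by lra. csimpl.
  replace (0 / (T + T)) with 0 by (field; lra). rewrite atan_0. f_equal. ring. Qed.

Lemma cos_mono phi th : 0 <= Rabs phi <= Rabs th -> Rabs th < PI / 2 -> cos th <= cos phi.
Proof. intros H1 H2. assert (cos th = cos (Rabs th)).
  { unfold Rabs; destruct (Rcase_abs th); auto. rewrite cos_neg; auto. }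
  assert (cos phi = cos (Rabs phi)).
  { unfold Rabs; destruct (Rcase_abs phi); auto. rewrite cos_neg; auto. }
  rewrite H, H0. destruct (Req_dec (Rabs phi) (Rabs th)). rewrite H3; lra.
  left. pose proof PI_RGT_0. pose proof (Rabs_pos th). apply cos_decreasing_1; lra. Qed.

Definition Zr R phi : Cplx := (- (R * cos phi), - (R * sin phi)).
Definition Hrot R phi : Cplx := Cadd (0, phi) (Ei0 (Zr R phi)).

Lemma CD_Zr R phi : CD (Zr R) phi (R * sin phi, - (R * cos phi)).
Proof. split; unfold Zr, Re, Im; cbn [fst snd].
  eapply D_eq. apply D_opp, D_scal. apply (D_cos (fun t => t)), D_id. cbv beta; ring.
  eapply D_eq. apply D_opp, D_scal. apply (D_sin (fun t => t)), D_id. cbv beta; ring. Qed.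

Lemma Cnorm_Zr R phi : 0 <= R -> Cnorm (Zr R phi) = R.
Proof. intro H. unfold Cnorm, Zr, Re, Im; cbn [fst snd].
  replace ((- (R * cos phi)) ^ 2 + (- (R * sin phi)) ^ 2) with (R ^ 2).
  apply sqrt_pow2; auto. pose proof (sin2_cos2 phi). unfold Rsqr in H0. nra. Qed.
Lemma Cnorm_dZr R phi : 0 <= R -> Cnorm (R * sin phi, - (R * cos phi)) = R.
Proof. intro H. unfold Cnorm, Re, Im; cbn [fst snd].
  replace ((R * sin phi) ^ 2 + (- (R * cos phi)) ^ 2) with (R ^ 2).
  apply sqrt_pow2; auto. pose proof (sin2_cos2 phi). unfold Rsqr in H0. nra. Qed.

Lemma CD_Hrot R phi : 0 <= R -> CD (Hrot R) phi (Cmul (0,1) (Cexp (Zr R phi))).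
Proof. intro HR. unfold Hrot. eapply CD_eq. apply CD_add.
  instantiate (1 := (0,1)). split; unfold Re, Im; cbn [fst snd]. apply D_const. apply D_id.
  apply (CD_Ei0 (Zr R) (fun t => (R * sin t, - (R * cos t))) phi 1 R). lra.
  intros t _. split. apply CD_Zr. rewrite Cnorm_Zr, Cnorm_dZr by auto. lra.
  rewrite <- ES_rel. unfold Zr. ceq; ring. Qed.

Lemma Hrot_bound R th : 0 <= R -> Rabs th < PI / 2 ->
  Cnorm (Csub (Hrot R th) (Hrot R 0)) <= Rabs th * exp (- (R * cos th)).
Proof. intros HR Hth. set (c := exp (- (R * cos th))).
  assert (Hb : forall phi, Rabs phi <= Rabs th -> Cnorm (Cmul (0,1) (Cexp (Zr R phi))) <= c).
  { intros phi Hp. rewrite Cnorm_mul, Cnorm_i, Cnorm_Cexp. unfold Zr, Re; cbn [fst]. rewrite Rmult_1_l.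
    apply exp_le. assert (cos th <= cos phi) by (apply cos_mono; auto; split; auto; apply Rabs_pos). nra. }
  destruct (Rle_dec 0 th).
  - assert (Cnorm (Csub (Hrot R th) (Hrot R 0)) <= (fun s => c * s) th - (fun s => c * s) 0).
    { apply (Ccomp (Hrot R) (fun phi => Cmul (0,1) (Cexp (Zr R phi))) (fun s => c * s) (fun _ => c)); auto.
      intros; apply CD_Hrot; auto. intros; eapply D_eq. apply D_scal, D_id. ring.
      intros x Hx. apply Hb. rewrite !Rabs_right; lra. }
    rewrite Rabs_right by lra. unfold c in *. lra.
  - assert (Cnorm (Csub (Hrot R 0) (Hrot R th)) <= (fun s => c * s) 0 - (fun s => c * s) th).
    { apply (Ccomp (Hrot R) (fun phi => Cmul (0,1) (Cexp (Zr R phi))) (fun s => c * s) (fun _ => c)); try lra.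
      intros; apply CD_Hrot; auto. intros; eapply D_eq. apply D_scal, D_id. ring.
      intros x Hx. apply Hb. rewrite !Rabs_left1; lra. }
    rewrite Cnorm_sub_sym. rewrite Rabs_left by lra. unfold c in *. lra. Qed.

Lemma Carg_bound b : 0 < Re b -> Rabs (Carg b) < PI / 2.
Proof. intro H. unfold Carg. pose proof (Im_le_Cnorm b). pose proof (Cnorm_ge0 b).
  set (u := Im b / (Cnorm b + Re b)).
  assert (Hu : -1 < u < 1).
  { unfold u. apply Rabs_def2 in H0 || idtac. split.
    - apply Rmult_lt_reg_r with (Cnorm b + Re b). lra. unfold Rdiv. rewrite Rmult_assoc, Rinv_l, Rmult_1_r by lra.
      pose proof (Rle_abs (- Im b)). rewrite Rabs_Ropp in H2. lra.
    - apply Rmult_lt_reg_r with (Cnorm b + Re b). lra. unfold Rdiv. rewrite Rmult_assoc, Rinv_l, Rmult_1_r by lra.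
      pose proof (Rle_abs (Im b)). lra. }
  assert (atan u < PI / 4) by (rewrite <- atan_1; apply atan_increasing; lra).
  assert (- (PI / 4) < atan u) by (rewrite <- atan_1, <- atan_opp; apply atan_increasing; lra).
  apply Rabs_def1; lra. Qed.

Lemma phi_lim0 bt : Re bt < 0 -> forall e, 0 < e -> exists M, forall d, M < d -> Cnorm (phi bt d) < e.
Proof. intros Hb e He.
  set (b := Copp bt). set (r := Cnorm b). set (th := Carg b).
  assert (Hbp : 0 < Re b) by (unfold b; rewrite Re_opp; lra).
  assert (Hr : 0 < r). { unfold r. pose proof (Re_le_Cnorm b). pose proof (Rle_abs (Re b)). lra. }
  assert (Hth : Rabs th < PI / 2) by (apply Carg_bound; auto).
  assert (Hc : 0 < cos th) by (apply cos_gt_0; apply Rabs_def2 in Hth; lra).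
  assert (Hbe : b = (r * cos th, r * sin th)).
  { rewrite <- (Cexp_Clog b) at 1. unfold Cexp, Clog. csimpl. fold r. fold th. rewrite exp_ln by auto. auto.
    intros [_ h]; lra. }
  assert (Hbt : bt = (- (r * cos th), - (r * sin th))).
  { replace bt with (Copp b) by (unfold b; ceq; ring). rewrite Hbe. reflexivity. }
  destruct (gamma_lim (e / 2)) as [M1 HM1]. lra.
  set (A := Rmax M1 (Rmax 0 (ln (2 * (Rabs th + 1) / e) / cos th))).
  exists (exp ((Rabs A + 1) / r)). intros d Hd.
  assert (Hd1 : 0 < d) by (pose proof (exp_pos ((Rabs A + 1) / r)); lra).
  assert (HT : (Rabs A + 1) / r < ln d).
  { rewrite <- (ln_exp ((Rabs A + 1) / r)). apply ln_increasing; auto. apply exp_pos. }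
  set (T := ln d) in *.
  assert (HT0 : 0 < T). { eapply Rle_lt_trans; [|exact HT]. apply Rlt_le, Rdiv_lt_0_compat; auto. pose proof (Rabs_pos A); lra. }
  set (R := r * T).
  assert (HRA : A < R). { unfold R. apply Rmult_lt_reg_r with (/ r). apply Rinv_0_lt_compat; auto.
    replace (r * T * / r) with T by (field; lra). pose proof (Rle_abs A). unfold Rdiv in HT.
    assert (A * / r <= (Rabs A + 1) * / r) by (apply Rmult_le_compat_r; [left; apply Rinv_0_lt_compat; auto| lra]). lra. }
  assert (HR0 : 0 <= R) by (unfold R; nra).
  assert (Hphi : phi bt d = Cadd (CR (euler_gamma + ln R + eR R)) (Csub (Hrot R th) (Hrot R 0))).
  { unfold phi. fold T. rewrite Clog_CR by auto. fold b.
    assert (Cmul bt (CR T) = Zr R th) by (rewrite Hbt; unfold Zr, R; ceq; ring).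
    rewrite H. unfold Hrot. replace (Zr R 0) with (CR (- R)) by (unfold Zr; rewrite cos_0, sin_0; ceq; ring).
    unfold R. rewrite ln_mult by auto. fold R. unfold eR. pose proof (Im_Ei0_real (- R)).
    unfold Clog. fold r th. ceq. ring. rewrite H0. ring. }
  rewrite Hphi. eapply Rle_lt_trans. apply Cnorm_add. rewrite Cnorm_CR.
  assert (H1 : Rabs (euler_gamma + ln R + eR R) < e / 2) by (apply HM1; unfold A in HRA; pose proof (Rmax_l M1 (Rmax 0 (ln (2 * (Rabs th + 1) / e) / cos th))); lra).
  pose proof (Hrot_bound R th HR0 Hth).
  assert (H2 : Rabs th * exp (- (R * cos th)) < e / 2).
  { assert (HL : ln (2 * (Rabs th + 1) / e) / cos th < R).
    { unfold A in HRA. pose proof (Rmax_r M1 (Rmax 0 (ln (2 * (Rabs th + 1) / e) / cos th))).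
      pose proof (Rmax_r 0 (ln (2 * (Rabs th + 1) / e) / cos th)). lra. }
    assert (HL2 : ln (2 * (Rabs th + 1) / e) < R * cos th).
    { apply Rmult_lt_compat_r with (r := cos th) in HL; auto. unfold Rdiv in HL. rewrite Rmult_assoc, Rinv_l, Rmult_1_r in HL by lra. auto. }
    assert (HE : exp (- (R * cos th)) < e / (2 * (Rabs th + 1))).
    { pose proof (Rabs_pos th). replace (e / (2 * (Rabs th + 1))) with (exp (- ln (2 * (Rabs th + 1) / e))).
      apply exp_increasing. lra. rewrite exp_Ropp, exp_ln. field. split; lra. apply Rdiv_lt_0_compat; lra. }
    pose proof (Rabs_pos th). pose proof (exp_pos (- (R * cos th))).
    apply Rle_lt_trans with ((Rabs th + 1) * exp (- (R * cos th))). nra.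
    replace (e / 2) with ((Rabs th + 1) * (e / (2 * (Rabs th + 1)))) by (field; lra).
    apply Rmult_lt_compat_l; lra. }
  lra. Qed.
Lemma ln_le_x x : 0 < x -> ln x <= x - 1.
Proof. intro H. pose proof (exp_ineq1_le (ln x)). rewrite exp_ln in H0 by auto. lra. Qed.
Lemma ln_ge_inv x : 0 < x -> 1 - / x <= ln x.
Proof. intro H. pose proof (ln_le_x (/ x) ltac:(apply Rinv_0_lt_compat; auto)). rewrite ln_Rinv in H0 by auto. lra. Qed.
Lemma ln_pos x : 1 < x -> 0 < ln x.
Proof. intro H. rewrite <- ln_1. apply ln_increasing; lra. Qed.
Lemma sqrt_ge L : 0 <= L <= 1 -> L <= sqrt L.
Proof. intro H. rewrite <- (sqrt_pow2 L) at 1 by lra. apply sqrt_le_1_alt. nra. Qed.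
Lemma Lln_bound L : 0 < L <= 1 -> L * Rabs (ln L) <= 2 * sqrt L.
Proof. intro H. assert (Hs : 0 < sqrt L) by (apply sqrt_lt_R0; lra).
  assert (HsL : sqrt L * sqrt L = L) by (apply sqrt_sqrt; lra).
  assert (ln L <= 0). { destruct H as [H1 [H2|H2]]. left. rewrite <- ln_1. apply ln_increasing; lra. subst; rewrite ln_1; lra. }
  rewrite Rabs_left1 by auto.
  assert (ln L = 2 * ln (sqrt L)). { rewrite <- HsL at 1. rewrite ln_mult by auto. ring. }
  assert (- ln (sqrt L) <= / sqrt L - 1). { rewrite <- ln_Rinv by auto. apply ln_le_x. apply Rinv_0_lt_compat; auto. }
  rewrite H1. rewrite <- HsL at 1.
  assert (sqrt L * sqrt L * - (2 * ln (sqrt L)) <= sqrt L * sqrt L * (2 * (/ sqrt L - 1))).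
  { apply Rmult_le_compat_l. nra. lra. }
  assert (sqrt L * sqrt L * (2 * (/ sqrt L - 1)) <= 2 * sqrt L).
  { replace (sqrt L * sqrt L * (2 * (/ sqrt L - 1))) with (2 * sqrt L - 2 * L). lra.
    symmetry. transitivity (2 * sqrt L - 2 * (sqrt L * sqrt L)). field; lra. rewrite HsL; ring. }
  lra. Qed.

Definition PW (w : Cplx) (x : R) : Cplx := Cexp (Cmul w (CR (ln x))).
Lemma Crpow_PW x w : Crpow x w = PW w x. Proof. reflexivity. Qed.
Lemma CD_PW w x : 0 < x -> CD (PW w) x (Cmul (PW w x) (Cmul w (CR (/ x)))).
Proof. intro H. apply CD_exp. apply CD_cmul. apply CD_CR. apply derivable_pt_lim_ln; auto. Qed.
Lemma PW_add a b x : PW (Cadd a b) x = Cmul (PW a x) (PW b x).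
Proof. unfold PW. rewrite <- Cexp_add. f_equal. ceq; ring. Qed.
Lemma PW_real a x : 0 < x -> PW (CR a) x = CR (exp (a * ln x)).
Proof. intro H. unfold PW, Cexp. ceq. replace (a * ln x - 0 * 0) with (a * ln x) by ring.
  replace (a * 0 + 0 * ln x) with 0 by ring. rewrite cos_0; ring.
  replace (a * 0 + 0 * ln x) with 0 by ring. rewrite sin_0; ring. Qed.
Lemma Cnorm_PW w x : Cnorm (PW w x) = exp (Re w * ln x).
Proof. unfold PW. rewrite Cnorm_Cexp. csimpl. f_equal. ring. Qed.
Lemma PW_m1 x : 0 < x -> PW (CR (-1)) x = CR (/ x).
Proof. intro H. rewrite PW_real by auto. f_equal. replace (-1 * ln x) with (- ln x) by ring.
  rewrite exp_Ropp, exp_ln; auto. Qed.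
Lemma PW_1 x : 0 < x -> PW (CR 1) x = CR x.
Proof. intro H. rewrite PW_real by auto. f_equal. rewrite Rmult_1_l, exp_ln; auto. Qed.

Definition phi1 b y := Cadd (Cadd (Cadd (CR euler_gamma) (CR (ln (ln y)))) (Clog (Copp b))) (Ei0 (Cmul b (CR (ln y)))).
Lemma phi_phi1 b y : 1 < y -> phi b y = phi1 b y.
Proof. intro H. unfold phi, phi1. rewrite Clog_CR by (apply ln_pos; auto). auto. Qed.

Lemma CD_phi b x : 1 < x -> CD (phi b) x (Cmul (PW b x) (CR (/ (x * ln x)))).
Proof. intro Hx. apply (CD_ext_loc (phi1 b)).
  { exists (x - 1). split. lra. intros t Ht. rewrite phi_phi1; auto. apply Rabs_def2 in Ht. lra. }
  assert (HL : 0 < ln x) by (apply ln_pos; auto).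
  unfold phi1. eapply CD_eq. apply CD_add. apply CD_add. apply CD_add. apply CD_const.
  apply CD_CR. apply D_ln. apply derivable_pt_lim_ln. lra. auto. apply CD_const.
  apply (CD_Ei0 (fun y => Cmul b (CR (ln y))) (fun y => Cmul b (CR (/ y))) x (x - 1) (Cnorm b * (2 * x + 1))). lra.
  { intros t Ht. apply Rabs_def2 in Ht. assert (1 < t) by lra. pose proof (ln_pos t H). pose proof (ln_le_x t ltac:(lra)).
    pose proof (Cnorm_ge0 b). split. apply CD_cmul, CD_CR, derivable_pt_lim_ln; lra. split.
    - rewrite Cnorm_mulR. apply Rmult_le_compat_l; auto. rewrite Rabs_right; lra.
    - rewrite Cnorm_mulR. apply Rmult_le_compat_l; auto. rewrite Rabs_right. 
      assert (/ t < 1). { rewrite <- Rinv_1. apply Rinv_lt_contravar; lra. } lra.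
      left; apply Rinv_0_lt_compat; lra. }
  unfold PW. rewrite <- ES_rel. ceq; field; lra. Qed.

Definition Pf a x := Cadd (Cmul (CR (- / x)) (phi a x)) (phi (Csub a (CR 1)) x).

Lemma CD_Pf a x : 1 < x -> CD (Pf a) x (Cdiv (phi a x) (CR (x ^ 2))).
Proof. intro Hx. unfold Pf. eapply CD_eq. apply CD_add. apply CD_mul.
  apply CD_CR. apply D_opp. apply D_inv. apply D_id. lra. apply CD_phi; auto. apply CD_phi; auto.
  assert (PW (Csub a (CR 1)) x = Cmul (PW a x) (CR (/ x))).
  { replace (Csub a (CR 1)) with (Cadd a (CR (-1))) by (ceq; ring). rewrite PW_add, PW_m1 by lra. auto. }
  rewrite H. unfold Cdiv. rewrite Cinv_CR. 2: { apply pow_nonzero; lra. }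
  assert (ln x <> 0) by (pose proof (ln_pos x Hx); lra). ceq; field; split; lra. Qed.
Definition E1 (P : R -> Prop) := exists d, 0 < d /\ forall x, 1 < x < 1 + d -> P x.
Definition Einf (P : R -> Prop) := exists M, forall x, M < x -> P x.
Definition limF (E : (R -> Prop) -> Prop) (g : R -> Cplx) l := forall e, 0 < e -> E (fun x => Cnorm (Csub (g x) l) < e).

Definition goodE (E : (R -> Prop) -> Prop) := (forall P Q : R -> Prop, E P -> E Q -> E (fun x => P x /\ Q x)) /\
  (forall P Q : R -> Prop, (forall x, P x -> Q x) -> E P -> E Q).
Lemma good1 : goodE E1.
Proof. split. intros P Q [d1 [H1 HP]] [d2 [H2 HQ]]. exists (Rmin d1 d2). split. apply Rmin_pos; auto.
  intros x Hx. pose proof (Rmin_l d1 d2). pose proof (Rmin_r d1 d2). split; [apply HP|apply HQ]; lra.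
  intros P Q H [d [Hd HP]]. exists d. split; auto. Qed.
Lemma goodinf : goodE Einf.
Proof. split. intros P Q [M1 HP] [M2 HQ]. exists (Rmax M1 M2). intros x Hx.
  pose proof (Rmax_l M1 M2). pose proof (Rmax_r M1 M2). split; [apply HP|apply HQ]; lra.
  intros P Q H [M HP]. exists M. auto. Qed.

Section LimAlg.
Variable E : (R -> Prop) -> Prop.
Hypothesis HE : goodE E.
Lemma limF_const c : E (fun _ => True) -> limF E (fun _ => c) c.
Proof. intros Ht e He. destruct HE as [_ Hm]. apply (Hm (fun _ => True)); auto.
  intros. replace (Csub c c) with (CR 0) by (ceq; ring). rewrite Cnorm_CR, Rabs_R0; auto. Qed.
Lemma limF_add g1 g2 l1 l2 : limF E g1 l1 -> limF E g2 l2 -> limF E (fun x => Cadd (g1 x) (g2 x)) (Cadd l1 l2).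
Proof. intros H1 H2 e He. destruct HE as [Ha Hm]. apply (Hm (fun x => Cnorm (Csub (g1 x) l1) < e/2 /\ Cnorm (Csub (g2 x) l2) < e/2)).
  intros x [a b]. replace (Csub (Cadd (g1 x) (g2 x)) (Cadd l1 l2)) with (Cadd (Csub (g1 x) l1) (Csub (g2 x) l2)) by (ceq; ring).
  eapply Rle_lt_trans. apply Cnorm_add. lra. apply Ha; [apply H1|apply H2]; lra. Qed.
Lemma limF_opp g l : limF E g l -> limF E (fun x => Copp (g x)) (Copp l).
Proof. intros H e He. destruct HE as [_ Hm]. apply (Hm (fun x => Cnorm (Csub (g x) l) < e)); auto.
  intros x Hx. replace (Csub (Copp (g x)) (Copp l)) with (Copp (Csub (g x) l)) by (ceq; ring). rewrite Cnorm_opp; auto. Qed.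
Lemma limF_sub g1 g2 l1 l2 : limF E g1 l1 -> limF E g2 l2 -> limF E (fun x => Csub (g1 x) (g2 x)) (Csub l1 l2).
Proof. intros. apply limF_add; auto. apply limF_opp; auto. Qed.
Lemma limF_mul g1 g2 l1 l2 : limF E g1 l1 -> limF E g2 l2 -> limF E (fun x => Cmul (g1 x) (g2 x)) (Cmul l1 l2).
Proof. intros H1 H2 e He. destruct HE as [Ha Hm].
  set (a := Cnorm l1). set (b := Cnorm l2). assert (0 <= a) by apply Cnorm_ge0. assert (0 <= b) by apply Cnorm_ge0.
  set (e1 := e / (2 * (b + 1))). set (e2 := Rmin 1 (e / (2 * (a + 1)))).
  assert (He1 : 0 < e1) by (unfold e1; apply Rdiv_lt_0_compat; lra).
  assert (He2 : 0 < e2) by (unfold e2; apply Rmin_pos; [lra|apply Rdiv_lt_0_compat; lra]).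
  apply (Hm (fun x => Cnorm (Csub (g1 x) l1) < e1 /\ Cnorm (Csub (g2 x) l2) < e2)).
  2: { apply Ha; [apply H1|apply H2]; auto. }
  intros x [h1 h2].
  replace (Csub (Cmul (g1 x) (g2 x)) (Cmul l1 l2)) with (Cadd (Cmul (Csub (g1 x) l1) (g2 x)) (Cmul l1 (Csub (g2 x) l2))) by (ceq; ring).
  eapply Rle_lt_trans. apply Cnorm_add. rewrite !Cnorm_mul. fold a.
  assert (Cnorm (g2 x) <= b + 1).
  { replace (g2 x) with (Cadd (Csub (g2 x) l2) l2) by (ceq; ring). eapply Rle_trans. apply Cnorm_add.
    pose proof (Rmin_l 1 (e / (2 * (a + 1)))). fold e2 in H3. fold b. lra. }
  assert (Cnorm (Csub (g1 x) l1) * Cnorm (g2 x) <= e1 * (b + 1)).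
  { apply Rmult_le_compat; try apply Cnorm_ge0; lra. }
  assert (a * Cnorm (Csub (g2 x) l2) <= a * (e / (2 * (a + 1)))).
  { apply Rmult_le_compat_l; auto. pose proof (Rmin_r 1 (e / (2 * (a + 1)))). fold e2 in H5. lra. }
  assert (e1 * (b+1) = e/2) by (unfold e1; field; lra).
  assert (a * (e / (2 * (a + 1))) < e / 2).
  { replace (a * (e / (2 * (a + 1)))) with ((e/2) * (a / (a+1))) by (field; lra).
    assert (a / (a+1) < 1). { apply Rmult_lt_reg_r with (a+1). lra. field_simplify; lra. }
    nra. }
  lra. Qed.
Lemma limF_ext g1 g2 l : E (fun x => g1 x = g2 x) -> limF E g1 l -> limF E g2 l.
Proof. intros Heq H e He. destruct HE as [Ha Hm]. apply (Hm (fun x => g1 x = g2 x /\ Cnorm (Csub (g1 x) l) < e)).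
  intros x [h1 h2]. rewrite <- h1; auto. apply Ha; auto. Qed.
Lemma limF_bound g l (B : R -> R) : (forall e, 0 < e -> E (fun x => B x < e)) ->
  E (fun x => Cnorm (Csub (g x) l) <= B x) -> limF E g l.
Proof. intros HB Hg e He. destruct HE as [Ha Hm]. apply (Hm (fun x => B x < e /\ Cnorm (Csub (g x) l) <= B x)).
  intros x [h1 h2]; lra. apply Ha; auto. Qed.
End LimAlg.

Lemma E1_true : E1 (fun _ => True).
Proof. exists 1. split; auto; lra. Qed.
Lemma Einf_true : Einf (fun _ => True).
Proof. exists 0. auto. Qed.

Lemma E1_sqrt C : forall e, 0 < e -> E1 (fun x => C * sqrt (ln x) < e).
Proof. intros e He. set (eta := e / (Rabs C + 1)). assert (Heta : 0 < eta) by (unfold eta; apply Rdiv_lt_0_compat; pose proof (Rabs_pos C); lra).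
  set (m := Rmin 1 (eta * eta)). assert (Hm : 0 < m) by (unfold m; apply Rmin_pos; nra).
  exists (exp m - 1). split. pose proof (exp_ineq1 m ltac:(lra)). lra.
  intros x Hx. assert (HL : 0 < ln x) by (apply ln_pos; lra).
  assert (ln x < m). { rewrite <- (ln_exp m). apply ln_increasing; lra. }
  assert (sqrt (ln x) < eta). { rewrite <- (sqrt_pow2 eta) by lra. apply sqrt_lt_1_alt. split. lra.
    pose proof (Rmin_r 1 (eta*eta)). simpl. fold m in H0. lra. }
  assert (0 <= sqrt (ln x)) by apply sqrt_pos.
  apply Rle_lt_trans with (Rabs C * sqrt (ln x)). pose proof (Rle_abs C). nra.
  apply Rle_lt_trans with (Rabs C * eta). pose proof (Rabs_pos C). nra.
  unfold eta. apply Rmult_lt_reg_r with (Rabs C + 1). pose proof (Rabs_pos C). lra.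
  field_simplify; pose proof (Rabs_pos C); try lra. Qed.

Lemma E1_Lle1 : E1 (fun x => ln x <= 1).
Proof. exists (exp 1 - 1). split. pose proof (exp_ineq1 1 ltac:(lra)). lra.
  intros x Hx. left. rewrite <- (ln_exp 1). apply ln_increasing; lra. Qed.

Lemma lim1_sqrt g l C : (forall x, 1 < x -> ln x <= 1 -> Cnorm (Csub (g x) l) <= C * sqrt (ln x)) -> limF E1 g l.
Proof. intro H. apply (limF_bound E1 good1 g l (fun x => C * sqrt (ln x))). apply E1_sqrt.
  destruct E1_Lle1 as [d [Hd Hx]]. exists d. split; auto. intros x Hx'. apply H. lra. apply Hx; auto. Qed.

Lemma Einf_decay K kap : 0 < kap -> forall e, 0 < e -> Einf (fun x => K * (1 + ln x) * exp (- (kap * ln x)) < e).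
Proof. intros Hk e He. set (C := Rabs K * (1 + 2 / kap)). assert (HC : 0 <= C) by (unfold C; pose proof (Rabs_pos K); apply Rmult_le_pos; auto; pose proof (Rdiv_lt_0_compat 2 kap ltac:(lra) Hk); lra).
  set (T0 := Rmax 0 ((2 / kap) * ln ((C + 1) / e))).
  exists (exp T0). intros x Hx. assert (Hx0 : 0 < x) by (pose proof (exp_pos T0); lra).
  assert (HL : T0 < ln x) by (rewrite <- (ln_exp T0); apply ln_increasing; auto; apply exp_pos).
  set (L := ln x) in *. assert (HL0 : 0 <= L) by (pose proof (Rmax_l 0 ((2 / kap) * ln ((C + 1) / e))); fold T0 in H; lra).
  assert (H1 : 1 + L <= (1 + 2 / kap) * exp (kap * L / 2)).
  { pose proof (exp_ineq1_le (kap * L / 2)). assert (1 <= exp (kap * L / 2)) by (rewrite <- exp_0; apply exp_le; nra).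
    assert (L <= 2 / kap * exp (kap * L / 2)).
    { assert (kap / 2 * L <= exp (kap * L / 2)) by (replace (kap / 2 * L) with (kap * L / 2) by field; lra).
      replace L with (2 / kap * (kap / 2 * L)) at 1 by (field; lra).
      apply Rmult_le_compat_l; auto. left; apply Rdiv_lt_0_compat; lra. }
    lra. }
  assert (H2 : exp (kap * L / 2) * exp (- (kap * L)) = exp (- (kap * L / 2))) by (rewrite <- exp_plus; f_equal; field; lra).
  assert (H3 : exp (- (kap * L / 2)) < e / (C + 1)).
  { replace (e / (C + 1)) with (exp (- ln ((C + 1) / e))). apply exp_increasing.
    pose proof (Rmax_r 0 ((2 / kap) * ln ((C + 1) / e))). fold T0 in H.
    assert (2 / kap * ln ((C + 1) / e) < L) by lra. apply Rmult_lt_compat_l with (r := kap / 2) in H0; [|lra].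
    replace (kap / 2 * (2 / kap * ln ((C + 1) / e))) with (ln ((C + 1) / e)) in H0 by (field; lra). lra.
    rewrite exp_Ropp, exp_ln. field. split; lra. apply Rdiv_lt_0_compat; lra. }
  apply Rle_lt_trans with (Rabs K * (1 + L) * exp (- (kap * L))).
  { pose proof (exp_pos (- (kap * L))). pose proof (Rle_abs K). apply Rmult_le_compat_r. lra. apply Rmult_le_compat_r; lra. }
  apply Rle_lt_trans with (C * exp (- (kap * L / 2))).
  { unfold C. rewrite <- H2. pose proof (exp_pos (- (kap * L))). pose proof (Rabs_pos K).
    replace (Rabs K * (1 + 2 / kap) * (exp (kap * L / 2) * exp (- (kap * L)))) with (Rabs K * ((1 + 2 / kap) * exp (kap * L / 2)) * exp (- (kap * L))) by ring.
    apply Rmult_le_compat_r. lra. apply Rmult_le_compat_l; auto. }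
  apply Rle_lt_trans with (C * (e / (C + 1))). apply Rmult_le_compat_l; auto. lra.
  apply Rmult_lt_reg_r with (C + 1). lra. field_simplify; lra. Qed.

Lemma liminf_decay g l K kap M0 : 0 < kap -> (forall x, M0 < x -> Cnorm (Csub (g x) l) <= K * (1 + ln x) * exp (- (kap * ln x))) ->
  limF Einf g l.
Proof. intros Hk H. apply (limF_bound Einf goodinf g l (fun x => K * (1 + ln x) * exp (- (kap * ln x)))).
  apply Einf_decay; auto. exists M0. auto. Qed.
Lemma max_Re_le b : Rmax 0 (Re b) <= Cnorm b.
Proof. pose proof (Re_le_Cnorm b). pose proof (Rle_abs (Re b)). pose proof (Cnorm_ge0 b). unfold Rmax; destruct (Rle_dec 0 (Re b)); lra. Qed.

Lemma Ei0_small b t : 0 <= t <= 1 -> Cnorm (Ei0 (Cmul b (CR t))) <= Cnorm b * exp (Cnorm b) * t.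
Proof. intro H. eapply Rle_trans. apply Ei0_bound; lra.
  replace (Cnorm b * t * exp (Rmax 0 (Re b) * t)) with (Cnorm b * exp (Rmax 0 (Re b) * t) * t) by ring.
  apply Rmult_le_compat_r. lra. apply Rmult_le_compat_l. apply Cnorm_ge0. apply exp_le.
  pose proof (max_Re_le b). pose proof (Rmax_l 0 (Re b)). nra. Qed.

Lemma Cnorm_CRmul a w : Cnorm (Cmul (CR a) w) = Rabs a * Cnorm w.
Proof. rewrite Cnorm_mul, Cnorm_CR; auto. Qed.

Lemma phi_diff_bound b1 b2 g K x : 0 <= K -> 1 < x -> ln x <= 1 ->
  Cnorm (Csub (CR 1) (g x)) <= K * ln x -> Cnorm (g x) <= K ->
  Cnorm (Csub (Csub (phi b1 x) (Cmul (phi b2 x) (g x))) (Csub (Clog (Copp b1)) (Clog (Copp b2)))) <=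
  (K * (Rabs euler_gamma + 2 + Cnorm (Clog (Copp b2))) + Cnorm b1 * exp (Cnorm b1) + Cnorm b2 * exp (Cnorm b2) * K) * sqrt (ln x).
Proof. intros HK Hx HL1 HG Hg. rewrite !phi_phi1 by auto. unfold phi1.
  set (L := ln x) in *. assert (HL : 0 < L) by (apply ln_pos; auto).
  set (G := Csub (CR 1) (g x)). fold G in HG.
  set (C2 := Clog (Copp b2)). set (E1v := Ei0 (Cmul b1 (CR L))). set (E2v := Ei0 (Cmul b2 (CR L))).
  replace (Csub (Csub (Cadd (Cadd (Cadd (CR euler_gamma) (CR (ln L))) (Clog (Copp b1))) E1v)
        (Cmul (Cadd (Cadd (Cadd (CR euler_gamma) (CR (ln L))) C2) E2v) (g x))) (Csub (Clog (Copp b1)) C2))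
    with (Cadd (Cadd (Cmul (CR (euler_gamma + ln L)) G) (Cmul C2 G)) (Csub E1v (Cmul E2v (g x))))
    by (unfold G; ceq; ring).
  assert (Hs : L <= sqrt L) by (apply sqrt_ge; lra).
  assert (Hls : L * Rabs (ln L) <= 2 * sqrt L) by (apply Lln_bound; lra).
  assert (HA : Cnorm (Cmul (CR (euler_gamma + ln L)) G) <= K * (Rabs euler_gamma + 2) * sqrt L).
  { rewrite Cnorm_CRmul. eapply Rle_trans. apply Rmult_le_compat_r. apply Cnorm_ge0. apply Rabs_triang.
    eapply Rle_trans. apply Rmult_le_compat_l. pose proof (Rabs_pos euler_gamma); pose proof (Rabs_pos (ln L)); lra. exact HG.
    pose proof (Rabs_pos euler_gamma).
    assert (K * Rabs euler_gamma * L <= K * Rabs euler_gamma * sqrt L) by (apply Rmult_le_compat_l; nra).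
    assert (K * (L * Rabs (ln L)) <= K * (2 * sqrt L)) by (apply Rmult_le_compat_l; auto).
    replace ((Rabs euler_gamma + Rabs (ln L)) * (K * L)) with (K * Rabs euler_gamma * L + K * (L * Rabs (ln L))) by ring.
    lra. }
  assert (HB : Cnorm (Cmul C2 G) <= K * Cnorm C2 * sqrt L).
  { rewrite Cnorm_mul. pose proof (Cnorm_ge0 C2). pose proof (Cnorm_ge0 G).
    apply Rle_trans with (Cnorm C2 * (K * L)). apply Rmult_le_compat_l; auto.
    replace (K * Cnorm C2 * sqrt L) with (Cnorm C2 * (K * sqrt L)) by ring. apply Rmult_le_compat_l; auto.
    apply Rmult_le_compat_l; auto. }
  assert (HC : Cnorm E1v <= Cnorm b1 * exp (Cnorm b1) * sqrt L).
  { eapply Rle_trans. apply Ei0_small; lra. pose proof (Cnorm_ge0 b1). pose proof (exp_pos (Cnorm b1)).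
    apply Rmult_le_compat_l; auto. nra. }
  assert (HD : Cnorm (Cmul E2v (g x)) <= Cnorm b2 * exp (Cnorm b2) * K * sqrt L).
  { rewrite Cnorm_mul. pose proof (Ei0_small b2 L ltac:(lra)). fold E2v in H.
    pose proof (Cnorm_ge0 b2). pose proof (exp_pos (Cnorm b2)). pose proof (Cnorm_ge0 E2v). pose proof (Cnorm_ge0 (g x)).
    apply Rle_trans with (Cnorm b2 * exp (Cnorm b2) * L * K). apply Rmult_le_compat; auto.
    assert (0 <= Cnorm b2 * exp (Cnorm b2)) by nra.
    replace (Cnorm b2 * exp (Cnorm b2) * L * K) with ((Cnorm b2 * exp (Cnorm b2) * K) * L) by ring.
    apply Rmult_le_compat_l; auto. nra. }
  eapply Rle_trans. apply Cnorm_add. eapply Rle_trans. apply Rplus_le_compat. apply Cnorm_add. apply Cnorm_sub.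
  fold C2. nra. Qed.

Lemma phi_growth b x : exp 1 <= x ->
  Cnorm (phi b x) <= (Rabs euler_gamma + Cnorm (Clog (Copp b)) + 1 + Cnorm b) * (1 + ln x) * exp (Rmax 0 (Re b) * ln x).
Proof. intro Hx. assert (Hx1 : 1 < x) by (pose proof (exp_ineq1 1 ltac:(lra)); lra).
  assert (HL : 1 <= ln x) by (rewrite <- (ln_exp 1); apply ln_le; auto; apply exp_pos).
  rewrite phi_phi1 by auto. unfold phi1. set (L := ln x) in *.
  assert (He : 1 <= exp (Rmax 0 (Re b) * L)) by (rewrite <- exp_0; apply exp_le; pose proof (Rmax_l 0 (Re b)); nra).
  assert (Hln : Rabs (ln L) <= L). { rewrite Rabs_right. pose proof (ln_le_x L); lra. rewrite <- ln_1. apply Rle_ge, ln_le; lra. }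
  eapply Rle_trans. apply Cnorm_add. eapply Rle_trans. apply Rplus_le_compat_r. apply Cnorm_add.
  eapply Rle_trans. apply Rplus_le_compat_r. apply Rplus_le_compat_r. apply Cnorm_add.
  rewrite !Cnorm_CR. pose proof (Ei0_bound b L ltac:(lra)).
  pose proof (Rabs_pos euler_gamma). pose proof (Cnorm_ge0 (Clog (Copp b))). pose proof (Cnorm_ge0 b).
  set (E := exp (Rmax 0 (Re b) * L)) in *.
  assert (Rabs euler_gamma <= Rabs euler_gamma * (1 + L) * E) by (apply Rle_trans with (Rabs euler_gamma * 1 * 1); [lra|]; apply Rmult_le_compat; nra).
  assert (Cnorm (Clog (Copp b)) <= Cnorm (Clog (Copp b)) * (1 + L) * E) by (apply Rle_trans with (Cnorm (Clog (Copp b)) * 1 * 1); [lra|]; apply Rmult_le_compat; nra).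
  assert (Rabs (ln L) <= 1 * (1 + L) * E) by nra.
  assert (Cnorm b * L * E <= Cnorm b * (1 + L) * E) by (apply Rmult_le_compat_r; nra).
  nra. Qed.
Definition c1 a := Csub (Clog (Copp (Csub a (CR 1)))) (Clog (Copp a)).
Definition Af a x := Csub (Pf a x) (c1 a).

Lemma Pf_alt a x : Pf a x = Csub (phi (Csub a (CR 1)) x) (Cmul (phi a x) (CR (/ x))).
Proof. unfold Pf. ceq; ring. Qed.

Definition CA1 a := (1 * (Rabs euler_gamma + 2 + Cnorm (Clog (Copp a))) + Cnorm (Csub a (CR 1)) * exp (Cnorm (Csub a (CR 1))) + Cnorm a * exp (Cnorm a) * 1).

Lemma A_small a x : 1 < x -> ln x <= 1 -> Cnorm (Af a x) <= CA1 a * sqrt (ln x).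
Proof. intros Hx HL. unfold Af, c1. rewrite Pf_alt. unfold CA1.
  apply (phi_diff_bound (Csub a (CR 1)) a (fun y => CR (/ y)) 1 x); try lra.
  - replace (Csub (CR 1) (CR (/ x))) with (CR (1 - / x)) by (ceq; ring). rewrite Cnorm_CR.
    pose proof (ln_ge_inv x ltac:(lra)). assert (/ x < 1) by (rewrite <- Rinv_1; apply Rinv_lt_contravar; lra).
    rewrite Rabs_right; lra.
  - rewrite Cnorm_CR. assert (/ x < 1) by (rewrite <- Rinv_1; apply Rinv_lt_contravar; lra).
    assert (0 < / x) by (apply Rinv_0_lt_compat; lra). rewrite Rabs_right; lra. Qed.

Lemma A_lim1 a : limF E1 (Af a) (CR 0).
Proof. apply (lim1_sqrt _ _ (CA1 a)). intros x Hx HL. replace (Csub (Af a x) (CR 0)) with (Af a x) by (ceq; ring).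
  apply A_small; auto. Qed.

Definition rho a := Rmax 0 (Re a - 1).
Definition KA a := (Rabs euler_gamma + Cnorm (Clog (Copp (Csub a (CR 1)))) + 1 + Cnorm (Csub a (CR 1))) +
   (Rabs euler_gamma + Cnorm (Clog (Copp a)) + 1 + Cnorm a) + Cnorm (c1 a).
Lemma KA_pos a : 0 <= KA a.
Proof. unfold KA. pose proof (Rabs_pos euler_gamma). pose proof (Cnorm_ge0 (Clog (Copp (Csub a (CR 1))))).
  pose proof (Cnorm_ge0 (Csub a (CR 1))). pose proof (Cnorm_ge0 (Clog (Copp a))). pose proof (Cnorm_ge0 a).
  pose proof (Cnorm_ge0 (c1 a)). lra. Qed.

Lemma A_growth a x : 0 < Re a -> exp 1 <= x -> Cnorm (Af a x) <= KA a * (1 + ln x) * exp (rho a * ln x).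
Proof. intros Ha Hx. assert (Hx1 : 1 < x) by (pose proof (exp_ineq1 1 ltac:(lra)); lra).
  assert (HL : 1 <= ln x) by (rewrite <- (ln_exp 1); apply ln_le; auto; apply exp_pos).
  unfold Af. rewrite Pf_alt. set (L := ln x) in *.
  pose proof (phi_growth (Csub a (CR 1)) x Hx). pose proof (phi_growth a x Hx). fold L in H, H0.
  rewrite Re_sub, Re_CR in H. fold (rho a) in H.
  assert (Hr : Rmax 0 (Re a) = Re a) by (apply Rmax_right; lra). rewrite Hr in H0.
  assert (Hix : / x = exp (- L)) by (unfold L; rewrite exp_Ropp, exp_ln; lra).
  assert (Hle : exp (Re a * L) * exp (- L) <= exp (rho a * L)).
  { rewrite <- exp_plus. apply exp_le. unfold rho. pose proof (Rmax_r 0 (Re a - 1)). nra. }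
  assert (He1 : 1 <= exp (rho a * L)) by (rewrite <- exp_0; apply exp_le; unfold rho; pose proof (Rmax_l 0 (Re a - 1)); nra).
  eapply Rle_trans. apply Cnorm_sub. eapply Rle_trans. apply Rplus_le_compat_r. apply Cnorm_sub.
  rewrite Cnorm_mul, Cnorm_CR. rewrite Rabs_right by (left; apply Rinv_0_lt_compat; lra). rewrite Hix.
  set (C1 := Rabs euler_gamma + Cnorm (Clog (Copp (Csub a (CR 1)))) + 1 + Cnorm (Csub a (CR 1))) in *.
  set (C2 := Rabs euler_gamma + Cnorm (Clog (Copp a)) + 1 + Cnorm a) in *.
  assert (HC1 : 0 <= C1) by (unfold C1; pose proof (Rabs_pos euler_gamma); pose proof (Cnorm_ge0 (Clog (Copp (Csub a (CR 1))))); pose proof (Cnorm_ge0 (Csub a (CR 1))); lra).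
  assert (HC2 : 0 <= C2) by (unfold C2; pose proof (Rabs_pos euler_gamma); pose proof (Cnorm_ge0 (Clog (Copp a))); pose proof (Cnorm_ge0 a); lra).
  assert (T2 : Cnorm (phi a x) * exp (- L) <= C2 * (1 + L) * exp (rho a * L)).
  { apply Rle_trans with (C2 * (1 + L) * exp (Re a * L) * exp (- L)). apply Rmult_le_compat_r. left; apply exp_pos. auto.
    rewrite Rmult_assoc. apply Rmult_le_compat_l. nra. auto. }
  assert (T3 : Cnorm (c1 a) <= Cnorm (c1 a) * (1 + L) * exp (rho a * L)).
  { pose proof (Cnorm_ge0 (c1 a)). apply Rle_trans with (Cnorm (c1 a) * 1 * 1). lra. apply Rmult_le_compat; nra. }
  unfold KA. fold C1 C2. nra. Qed.

Definition KG a := Rabs (CA1 a) + KA a.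
Lemma A_global a x : 0 < Re a -> 1 < x -> Cnorm (Af a x) <= KG a * (1 + ln x) * exp (rho a * ln x).
Proof. intros Ha Hx. assert (HL0 : 0 < ln x) by (apply ln_pos; auto).
  assert (He1 : 1 <= exp (rho a * ln x)) by (rewrite <- exp_0; apply exp_le; unfold rho; pose proof (Rmax_l 0 (Re a - 1)); nra).
  pose proof (KA_pos a). pose proof (Rabs_pos (CA1 a)).
  destruct (Rle_dec (ln x) 1).
  - eapply Rle_trans. apply A_small; auto.
    assert (sqrt (ln x) <= 1). { rewrite <- sqrt_1. apply sqrt_le_1_alt. auto. }
    assert (0 <= sqrt (ln x)) by apply sqrt_pos.
    apply Rle_trans with (Rabs (CA1 a)). pose proof (Rle_abs (CA1 a)).
    destruct (Rle_dec 0 (CA1 a)). nra. nra.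
    unfold KG. apply Rle_trans with ((Rabs (CA1 a) + KA a) * 1 * 1). nra. apply Rmult_le_compat; nra.
  - eapply Rle_trans. apply A_growth; auto. left. rewrite <- (exp_ln x) by lra. apply exp_increasing. lra.
    unfold KG. apply Rmult_le_compat_r. left; apply exp_pos. apply Rmult_le_compat_r; lra. Qed.
Lemma Cinv_unique w z : w <> CR 0 -> Cmul w z = CR 1 -> z = Cinv w.
Proof. intros Hw H. pose proof (Cmul_inv w Hw).
  transitivity (Cmul (Cinv w) (Cmul w z)). 2: { rewrite H. ceq; ring. }
  replace (Cmul (Cinv w) (Cmul w z)) with (Cmul (Cmul w (Cinv w)) z) by (ceq; ring).
  rewrite H0. ceq; ring. Qed.

Definition uu s := Cinv (Csub (CR 1) s).
Definition vv s := Cinv (Cmul s (Csub (CR 1) s)).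
Definition ff a s x := Cmul (Af a x) (PW (Copp s) x).
Definition Fcl a s x := Csub (Cmul (Cmul (Af a x) (PW (Csub (CR 1) s) x)) (uu s))
  (Cmul (Csub (phi (Csub a s) x) (Cmul (phi a x) (PW (Copp s) x))) (vv s)).

Lemma ne0_of_Re z : Re z <> 0 -> z <> CR 0.
Proof. intros H h. apply H. rewrite h. reflexivity. Qed.

Section Main.
Variables (a s : Cplx).
Hypothesis Ha : 0 < Re a.
Hypothesis Hs : 1 < Re s.
Hypothesis Has : Re a < Re s.

Lemma s1_ne0 : Csub (CR 1) s <> CR 0.
Proof. apply ne0_of_Re. rewrite Re_sub, Re_CR. lra. Qed.
Lemma s_ne0 : s <> CR 0.
Proof. apply ne0_of_Re. lra. Qed.
Lemma Hu : Cmul (Csub (CR 1) s) (uu s) = CR 1.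
Proof. apply Cmul_inv, s1_ne0. Qed.
Lemma Hv : Cmul s (vv s) = uu s.
Proof. unfold uu. apply Cinv_unique. apply s1_ne0.
  assert (Cmul s (Csub (CR 1) s) <> CR 0).
  { intro h. apply (f_equal Cnorm) in h. rewrite Cnorm_mul, Cnorm_CR, Rabs_R0 in h.
    pose proof (Cnorm_pos_ne s s_ne0). pose proof (Cnorm_pos_ne _ s1_ne0). nra. }
  unfold vv. transitivity (Cmul (Cmul s (Csub (CR 1) s)) (Cinv (Cmul s (Csub (CR 1) s)))).
  clear. ceq; ring. apply Cmul_inv; auto. Qed.

Lemma CD_Af x : 1 < x -> CD (Af a) x (Cdiv (phi a x) (CR (x ^ 2))).
Proof. intro Hx. unfold Af. eapply CD_eq. apply CD_sub. apply CD_Pf; auto. apply CD_const. ceq; ring. Qed.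

Lemma CD_Fcl x : 1 < x -> CD (Fcl a s) x (ff a s x).
Proof. intro Hx. assert (Hx0 : 0 < x) by lra. assert (HL : ln x <> 0) by (pose proof (ln_pos x Hx); lra).
  unfold Fcl. eapply CD_eq. apply CD_sub. apply CD_mulc. apply CD_mul. apply CD_Af; auto. apply CD_PW; auto.
  apply CD_mulc. apply CD_sub. apply CD_phi; auto. apply CD_mul. apply CD_phi; auto. apply CD_PW; auto.
  assert (E1' : PW (Csub (CR 1) s) x = Cmul (CR x) (PW (Copp s) x)).
  { replace (Csub (CR 1) s) with (Cadd (CR 1) (Copp s)) by (ceq; ring). rewrite PW_add, PW_1; auto. }
  assert (E2' : PW (Csub a s) x = Cmul (PW a x) (PW (Copp s) x)).
  { replace (Csub a s) with (Cadd a (Copp s)) by (ceq; ring). rewrite PW_add; auto. }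
  rewrite E1', E2'. unfold Cdiv. rewrite Cinv_CR by (apply pow_nonzero; lra).
  unfold ff. set (A := Af a x). set (P := PW (Copp s) x). set (Q := PW a x). set (F := phi a x).
  transitivity (Cadd (Cmul (Cmul A P) (Cmul (Csub (CR 1) s) (uu s))) (Cmul (Cmul (Cmul F P) (CR (/ x))) (Csub (uu s) (Cmul s (vv s))))).
  - ceq; field; repeat split; auto; lra.
  - rewrite Hu, Hv. ceq; ring. Qed.
End Main.
Lemma PW_small w x : 1 < x -> ln x <= 1 -> Cnorm (Csub (PW w x) (CR 1)) <= Cnorm w * exp (Cnorm w) * ln x.
Proof. intros Hx HL. assert (HL0 : 0 < ln x) by (apply ln_pos; auto). unfold PW.
  eapply Rle_trans. apply Cexp_sub1_bound. rewrite Cnorm_mulR, Rabs_right by lra.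
  replace (Cnorm w * ln x * exp (Rmax 0 (Re (Cmul w (CR (ln x)))))) with (Cnorm w * exp (Rmax 0 (Re (Cmul w (CR (ln x))))) * ln x) by ring.
  apply Rmult_le_compat_r. lra. apply Rmult_le_compat_l. apply Cnorm_ge0. apply exp_le.
  rewrite Re_mul, Re_CR, Im_CR. replace (Re w * ln x - Im w * 0) with (Re w * ln x) by ring.
  eapply Rle_trans. apply (max_scale (Re w) (ln x) 1). lra. rewrite Rmult_1_r. apply max_Re_le. Qed.

Lemma PW_lim1 w : limF E1 (PW w) (CR 1).
Proof. apply (lim1_sqrt _ _ (Cnorm w * exp (Cnorm w))). intros x Hx HL.
  eapply Rle_trans. apply PW_small; auto. apply Rmult_le_compat_l.
  pose proof (Cnorm_ge0 w); pose proof (exp_pos (Cnorm w)); nra. apply sqrt_ge. pose proof (ln_pos x Hx); lra. Qed.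

Definition F1 a s := Csub (Cmul (Cmul (CR 0) (CR 1)) (uu s)) (Cmul (Csub (Clog (Copp (Csub a s))) (Clog (Copp a))) (vv s)).
Definition Ival a s := Csub (CR 0) (F1 a s).

Section Lim.
Variables (a s : Cplx).
Hypothesis Ha : 0 < Re a.
Hypothesis Hs : 1 < Re s.
Hypothesis Has : Re a < Re s.

Lemma F_lim1 : limF E1 (Fcl a s) (F1 a s).
Proof. unfold Fcl, F1. apply (limF_sub E1 good1).
  - apply (limF_mul E1 good1). apply (limF_mul E1 good1). apply A_lim1. apply PW_lim1. apply limF_const. apply good1. apply E1_true.
  - apply (limF_mul E1 good1). 2: { apply limF_const. apply good1. apply E1_true. }
    set (K := Cnorm s * exp (Cnorm s) + 1).
    assert (HK : 0 <= K) by (unfold K; pose proof (Cnorm_ge0 s); pose proof (exp_pos (Cnorm s)); nra).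
    apply (lim1_sqrt _ _ (K * (Rabs euler_gamma + 2 + Cnorm (Clog (Copp a))) + Cnorm (Csub a s) * exp (Cnorm (Csub a s)) + Cnorm a * exp (Cnorm a) * K)).
    intros x Hx HL. apply (phi_diff_bound (Csub a s) a (PW (Copp s)) K x HK Hx HL).
    + pose proof (PW_small (Copp s) x Hx HL). rewrite Cnorm_opp in H. rewrite Cnorm_sub_sym.
      apply Rle_trans with (Cnorm s * exp (Cnorm s) * ln x); auto. apply Rmult_le_compat_r. pose proof (ln_pos x Hx); lra. unfold K; lra.
    + rewrite Cnorm_PW, Re_opp. assert (exp (- Re s * ln x) <= 1). { rewrite <- exp_0. apply exp_le. pose proof (ln_pos x Hx). nra. }
      unfold K. pose proof (Cnorm_ge0 s); pose proof (exp_pos (Cnorm s)). nra. Qed.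

Lemma F_liminf : limF Einf (Fcl a s) (CR 0).
Proof. apply (limF_ext Einf goodinf (fun x => Fcl a s x)). { exists 0. auto. }
  replace (CR 0) with (Csub (Cmul (CR 0) (uu s)) (Cmul (Csub (CR 0) (CR 0)) (vv s))) at 1 by (ceq; ring).
  unfold Fcl. apply (limF_sub Einf goodinf).
  - apply (limF_mul Einf goodinf). 2: { apply limF_const. apply goodinf. apply Einf_true. }
    apply (liminf_decay _ _ (KG a) (Re s - 1 - rho a) 1).
    { unfold rho. unfold Rmax; destruct (Rle_dec 0 (Re a - 1)); lra. }
    intros x Hx. replace (Csub (Cmul (Af a x) (PW (Csub (CR 1) s) x)) (CR 0)) with (Cmul (Af a x) (PW (Csub (CR 1) s) x)) by (ceq; ring).
    rewrite Cnorm_mul, Cnorm_PW, Re_sub, Re_CR.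
    eapply Rle_trans. apply Rmult_le_compat_r. left; apply exp_pos. apply A_global; auto.
    assert (HL : 0 < ln x) by (apply ln_pos; auto).
    replace (exp (- ((Re s - 1 - rho a) * ln x))) with (exp (rho a * ln x) * exp ((1 - Re s) * ln x)) by (rewrite <- exp_plus; f_equal; ring).
    right; ring.
  - apply (limF_mul Einf goodinf). 2: { apply limF_const. apply goodinf. apply Einf_true. }
    apply (limF_sub Einf goodinf).
    + intros e He. destruct (phi_lim0 (Csub a s)) with e as [M HM]. rewrite Re_sub; lra. auto.
      exists M. intros x Hx. replace (Csub (phi (Csub a s) x) (CR 0)) with (phi (Csub a s) x) by (ceq; ring). auto.
    + set (Ca := Rabs euler_gamma + Cnorm (Clog (Copp a)) + 1 + Cnorm a).
      apply (liminf_decay _ _ Ca (Re s - Re a) (exp 1)). lra.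
      intros x Hx. replace (Csub (Cmul (phi a x) (PW (Copp s) x)) (CR 0)) with (Cmul (phi a x) (PW (Copp s) x)) by (ceq; ring).
      rewrite Cnorm_mul, Cnorm_PW, Re_opp. eapply Rle_trans. apply Rmult_le_compat_r. left; apply exp_pos.
      apply phi_growth. lra. rewrite Rmax_right by lra.
      rewrite Rmult_assoc. rewrite <- exp_plus. right. f_equal. f_equal. ring. Qed.
End Lim.
Lemma cont_eps f x : continuity_pt f x -> forall e, 0 < e -> exists d, 0 < d /\ forall t, Rabs (t - x) < d -> Rabs (f t - f x) < e.
Proof. intros H e He. destruct (H e He) as [alp [Ha Hf]]. exists alp. split; auto. intros t Ht.
  destruct (Req_dec x t). subst. rewrite Rminus_diag, Rabs_R0; auto.
  apply (Hf t). split. split. constructor. auto. simpl. unfold Rdist. auto. Qed.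

Lemma CD_contC F x l : CD F x l -> forall e, 0 < e -> exists d, 0 < d /\ forall t, Rabs (t - x) < d -> Cnorm (Csub (F t) (F x)) < e.
Proof. intros H e He. destruct (CD_cont F x l H) as [H1 H2].
  destruct (cont_eps _ _ H1 (e/2)) as [d1 [Hd1 P1]]. lra. destruct (cont_eps _ _ H2 (e/2)) as [d2 [Hd2 P2]]. lra.
  exists (Rmin d1 d2). split. apply Rmin_pos; auto. intros t Ht. pose proof (Rmin_l d1 d2). pose proof (Rmin_r d1 d2).
  eapply Rle_lt_trans. apply Cnorm_le_ReIm. rewrite Re_sub, Im_sub.
  specialize (P1 t ltac:(lra)). specialize (P2 t ltac:(lra)). lra. Qed.

Lemma cont_Cnorm F x l : CD F x l -> continuity_pt (fun t => Cnorm (F t)) x.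
Proof. intro H. destruct (CD_cont F x l H) as [H1 H2]. unfold Cnorm.
  apply (continuity_pt_ext (comp sqrt (fun t => Re (F t) ^ 2 + Im (F t) ^ 2))). intro; reflexivity.
  apply continuity_pt_comp.
  - apply (continuity_pt_ext (plus_fct (mult_fct (fun t => Re (F t)) (fun t => Re (F t))) (mult_fct (fun t => Im (F t)) (fun t => Im (F t))))).
    intro; unfold plus_fct, mult_fct; simpl; ring.
    apply continuity_pt_plus; apply continuity_pt_mult; auto.
  - apply continuity_pt_sqrt. nra. Qed.

Lemma FTC_R (F f g : R -> R) a b : a <= b -> (forall x, a <= x <= b -> D F x (f x)) ->
  (forall x, a <= x <= b -> continuity_pt f x) -> (forall x, a <= x <= b -> g x = f x) -> is_RInt g a b (F b - F a).
Proof. intros Hab HD Hc Hg.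
  assert (H : RInt.is_RInt f a b (minus (F b) (F a))).
  { apply (is_RInt_derive (V := R_CompleteNormedModule) F f). intros x Hx. rewrite Rmin_left, Rmax_right in Hx by lra. apply is_derive_Reals, HD; auto.
    intros x Hx. rewrite Rmin_left, Rmax_right in Hx by lra. apply continuity_pt_filterlim. apply Hc; auto. }
  assert (H' : RInt.is_RInt g a b (minus (F b) (F a))).
  { apply (is_RInt_ext f). intros x Hx. rewrite Rmin_left, Rmax_right in Hx by lra. symmetry; apply Hg; lra. auto. }
  assert (Hex : ex_RInt g a b) by (exists (minus (F b) (F a)); auto).
  exists (ex_RInt_Reals_0 g a b Hex). rewrite <- RInt_Reals. rewrite (is_RInt_unique g a b _ H'). reflexivity. Qed.

Lemma FTC_C (F f g : R -> Cplx) a b : a <= b -> (forall x, a <= x <= b -> CD F x (f x)) ->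
  (forall x, a <= x <= b -> exists l, CD f x l) -> (forall x, a <= x <= b -> g x = f x) -> is_CRInt g a b (Csub (F b) (F a)).
Proof. intros Hab HD Hc Hg. split.
  - rewrite Re_sub. apply (FTC_R (fun t => Re (F t)) (fun t => Re (f t))); auto.
    intros; apply HD; auto. intros x Hx. destruct (Hc x Hx) as [l Hl]. apply (CD_cont f x l Hl).
    intros; rewrite Hg; auto.
  - rewrite Im_sub. apply (FTC_R (fun t => Im (F t)) (fun t => Im (f t))); auto.
    intros; apply HD; auto. intros x Hx. destruct (Hc x Hx) as [l Hl]. apply (CD_cont f x l Hl).
    intros; rewrite Hg; auto. Qed.

Lemma is_RInt_uniq f a b v w : is_RInt f a b v -> is_RInt f a b w -> v = w.
Proof. intros [p1 H1] [p2 H2]. subst. apply RiemannInt_P5. Qed.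
Lemma is_CRInt_uniq f a b v w : is_CRInt f a b v -> is_CRInt f a b w -> v = w.
Proof. intros [H1 H2] [H3 H4]. apply Cplx_eq; eapply is_RInt_uniq; eauto. Qed.

Lemma has_Cint_open_uniq f a b v w : a < b -> has_Cint_open f a b v -> has_Cint_open f a b w -> v = w.
Proof. intros Hab [_ Hv] [_ Hw].
  assert (forall e, 0 < e -> Cnorm (Csub v w) < 2 * e).
  { intros e He. destruct (Hv e He) as [d1 [Hd1 P1]]. destruct (Hw e He) as [d2 [Hd2 P2]].
    set (d := Rmin (Rmin d1 d2) (b - a)).
    assert (Hd : 0 < d) by (unfold d; apply Rmin_pos; [apply Rmin_pos|]; lra).
    assert (d <= d1 /\ d <= d2 /\ d <= b - a).
    { unfold d. pose proof (Rmin_l (Rmin d1 d2) (b - a)). pose proof (Rmin_r (Rmin d1 d2) (b - a)).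
      pose proof (Rmin_l d1 d2). pose proof (Rmin_r d1 d2). lra. }
    destruct (P1 (a + d/2) (b - d/2)) as [w1 [Hw1 N1]]; try lra.
    destruct (P2 (a + d/2) (b - d/2)) as [w2 [Hw2 N2]]; try lra.
    rewrite (is_CRInt_uniq _ _ _ _ _ Hw1 Hw2) in N1.
    eapply Rle_lt_trans. apply (Cnorm_tri3 v w2 w). rewrite Cnorm_sub_sym. lra. }
  assert (Cnorm (Csub v w) = 0).
  { destruct (Cnorm_ge0 (Csub v w)) as [h|h]; auto. specialize (H (Cnorm (Csub v w) / 4) ltac:(lra)). lra. }
  apply Cnorm_eq0 in H0. apply Cplx_eq. apply (f_equal Re) in H0. csimpl. lra.
  apply (f_equal Im) in H0. csimpl. lra. Qed.

Lemma Cint_open_eq f a b v : a < b -> has_Cint_open f a b v -> Cint_open f a b = v.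
Proof. intros Hab H. unfold Cint_open. apply (has_Cint_open_uniq f a b); auto.
  apply (epsilon_spec (inhabits (CR 0)) (fun v => has_Cint_open f a b v)). exists v; auto. Qed.

Lemma CD_invsq y : 1 < y -> CD (fun t => Cinv (CR (t ^ 2))) y (CR (- (2 * y) / (y ^ 2) ^ 2)).
Proof. intro Hy. apply (CD_ext_loc (fun t => CR (/ t ^ 2))).
  { exists (y - 1). split. lra. intros t Ht. apply Rabs_def2 in Ht. rewrite Cinv_CR; auto. apply pow_nonzero; lra. }
  apply CD_CR. eapply D_eq. apply D_inv. apply derivable_pt_lim_pow. apply pow_nonzero; lra. simpl. field; lra. Qed.

Lemma integrand_diff a y : 1 < y -> exists l, CD (fun t => Cdiv (phi a t) (CR (t ^ 2))) y l.
Proof. intro Hy. eexists. unfold Cdiv. apply CD_mul. apply CD_phi; auto. apply CD_invsq; auto. Qed.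

Lemma Phi_eq a x : 1 < x -> Phi a x = Cmul (CR x) (Af a x).
Proof. intro Hx. unfold Phi. f_equal. apply Cint_open_eq. auto. split.
  - intros c d Hc Hcd Hd. exists (Csub (Af a d) (Af a c)). apply (FTC_C (Af a) (fun t => Cdiv (phi a t) (CR (t ^ 2)))); auto.
    intros; apply CD_Af; lra. intros; apply integrand_diff; lra.
  - intros e He. destruct (A_lim1 a (e/2)) as [d1 [Hd1 P1]]. lra.
    destruct (CD_contC (Af a) x _ (CD_Af a x Hx) (e/2)) as [d2 [Hd2 P2]]. lra.
    exists (Rmin d1 d2). split. apply Rmin_pos; auto. intros c d Hc Hd Hcd.
    pose proof (Rmin_l d1 d2). pose proof (Rmin_r d1 d2).
    exists (Csub (Af a d) (Af a c)). split.
    apply (FTC_C (Af a) (fun t => Cdiv (phi a t) (CR (t ^ 2)))); auto.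
    intros; apply CD_Af; lra. intros; apply integrand_diff; lra.
    specialize (P1 c ltac:(lra)). specialize (P2 d ltac:(apply Rabs_def1; lra)).
    replace (Csub (Csub (Af a d) (Af a c)) (Af a x)) with (Csub (Csub (Af a d) (Af a x)) (Csub (Af a c) (CR 0))) by (ceq; ring).
    eapply Rle_lt_trans. apply Cnorm_sub. lra. Qed.
Lemma key_vv s : 1 < Re s -> Cmul (Cmul s (Csub (CR 1) s)) (vv s) = CR 1.
Proof. intro Hs. apply Cmul_inv. intro h. apply (f_equal Cnorm) in h. rewrite Cnorm_mul, Cnorm_CR, Rabs_R0 in h.
  pose proof (Cnorm_pos_ne s (s_ne0 s Hs)). pose proof (Cnorm_pos_ne _ (s1_ne0 s Hs)). nra. Qed.

Lemma lin_exp kap L : 0 < kap -> 0 <= L -> (1 + L) * exp (- (kap * L)) <= (1 + 2 / kap) * exp (- (kap * L / 2)).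
Proof. intros Hk HL.
  assert (H1 : 1 + L <= (1 + 2 / kap) * exp (kap * L / 2)).
  { pose proof (exp_ineq1_le (kap * L / 2)). assert (1 <= exp (kap * L / 2)) by (rewrite <- exp_0; apply exp_le; nra).
    assert (L <= 2 / kap * exp (kap * L / 2)).
    { assert (kap / 2 * L <= exp (kap * L / 2)) by (replace (kap / 2 * L) with (kap * L / 2) by field; lra).
      replace L with (2 / kap * (kap / 2 * L)) at 1 by (field; lra).
      apply Rmult_le_compat_l; auto. left; apply Rdiv_lt_0_compat; lra. }
    assert (0 < 2 / kap) by (apply Rdiv_lt_0_compat; lra). nra. }
  assert (H2 : exp (kap * L / 2) * exp (- (kap * L)) = exp (- (kap * L / 2))) by (rewrite <- exp_plus; f_equal; field; lra).
  rewrite <- H2. rewrite <- Rmult_assoc. apply Rmult_le_compat_r. left; apply exp_pos. auto. Qed.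

Lemma final_eq a s : ~ (Im a = 0 /\ 0 <= Re a) -> 0 < Re a -> 1 < Re s -> Re a < Re s ->
  Csub (CR 1) (Cdiv s a) = Cexp (Cmul (Copp (Cmul s (Csub s (CR 1)))) (Ival a s)).
Proof. intros Hn Ha Hs Has.
  set (X := Csub (Clog (Copp (Csub a s))) (Clog (Copp a))).
  assert (E1' : Cmul (Copp (Cmul s (Csub s (CR 1)))) (Ival a s) = Cmul X (Cmul (Cmul s (Csub (CR 1) s)) (vv s))).
  { unfold Ival, F1. fold X. ceq; ring. }
  rewrite E1', key_vv by auto.
  replace (Cmul X (CR 1)) with (Cadd (Clog (Copp (Csub a s))) (Copp (Clog (Copp a)))) by (unfold X; ceq; ring).
  rewrite Cexp_add. rewrite <- Cinv_Cexp. rewrite !Cexp_Clog.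
  - assert (Hp : Re a ^ 2 + Im a ^ 2 <> 0) by (intro h; nra).
    destruct a as [p q]. destruct s as [u v]. unfold Re, Im in *; cbn [fst snd] in *.
    assert (Hp' : (- p) ^ 2 + (- q) ^ 2 <> 0) by (intro h; nra). clear E1'.
    unfold Cdiv; ceq; field; try split; auto.
  - rewrite Im_opp, Re_opp. intros [h1 h2]. apply Hn. split; lra.
  - rewrite Im_opp, Re_opp, Re_sub. intros [h1 h2]. lra. Qed.

Theorem mainTheorem10 (alpha s : Cplx) :
  ~ (Im alpha = 0 /\ 0 <= Re alpha) ->
  0 < Re alpha ->
  1 < Re s ->
  Re alpha < Re s ->
  Leb_integrable_infty (fun x => Cdiv (Phi alpha x) (Crpow x (Cadd s (CR 1)))) 1 /\
  exists I : Cplx,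
    has_Cint_infty (fun x => Cdiv (Phi alpha x) (Crpow x (Cadd s (CR 1)))) 1 I /\
    Csub (CR 1) (Cdiv s alpha) = Cexp (Cmul (Copp (Cmul s (Csub s (CR 1)))) I).
Proof. intros Hn Ha Hs Has.
  set (g := fun x => Cdiv (Phi alpha x) (Crpow x (Cadd s (CR 1)))).
  assert (geq : forall x, 1 < x -> g x = ff alpha s x).
  { intros x Hx. unfold g, ff, Cdiv. rewrite Phi_eq by auto. rewrite Crpow_PW.
    assert (Cinv (PW (Cadd s (CR 1)) x) = Cmul (PW (Copp s) x) (CR (/ x))).
    { unfold PW at 1. rewrite Cinv_Cexp. replace (Copp (Cmul (Cadd s (CR 1)) (CR (ln x)))) with (Cmul (Cadd (Copp s) (CR (-1))) (CR (ln x))) by (ceq; ring).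
      fold (PW (Cadd (Copp s) (CR (-1))) x). rewrite PW_add, PW_m1 by lra. auto. }
    rewrite H. ceq; field; lra. }
  assert (Hff : forall x, 1 < x -> exists l, CD (ff alpha s) x l).
  { intros x Hx. eexists. unfold ff. apply CD_mul. apply CD_Af; auto. apply CD_PW; lra. }
  assert (HRI : forall c d, 1 < c -> c <= d -> is_CRInt g c d (Csub (Fcl alpha s d) (Fcl alpha s c))).
  { intros c d Hc Hcd. apply (FTC_C (Fcl alpha s) (ff alpha s) g); auto.
    intros; apply CD_Fcl; auto; lra. intros; apply Hff; lra. intros; apply geq; lra. }
  assert (HCRI : forall c d, 1 < c -> c <= d -> C_RI g c d).
  { intros c d Hc Hcd. eexists. apply HRI; auto. }
  split; [split|].
  - exact HCRI.
  - set (kap := Re s - rho alpha - 1).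
    assert (Hk : 0 < kap). { unfold kap, rho. unfold Rmax; destruct (Rle_dec 0 (Re alpha - 1)); lra. }
    assert (HKG : 0 <= KG alpha) by (unfold KG; pose proof (KA_pos alpha); pose proof (Rabs_pos (CA1 alpha)); lra).
    set (K' := KG alpha * (1 + 2 / kap)).
    assert (HK' : 0 <= K') by (unfold K'; apply Rmult_le_pos; auto; pose proof (Rdiv_lt_0_compat 2 kap ltac:(lra) Hk); lra).
    set (hm := fun x => K' * exp (- (1 + kap / 2) * ln x)).
    set (Gm := fun x => - (2 * K' / kap) * exp (- (kap / 2) * ln x)).
    assert (HDG : forall x, 0 < x -> D Gm x (hm x)).
    { intros x Hx. unfold Gm, hm. eapply D_eq. apply D_scal. apply D_exp. apply D_scal. apply derivable_pt_lim_ln; auto.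
      replace (- (1 + kap / 2) * ln x) with (- (kap / 2) * ln x + - ln x) by ring. rewrite exp_plus, exp_Ropp, exp_ln by auto.
      field. split; lra. }
    assert (Hbound : forall x, 1 < x -> Cnorm (g x) <= hm x).
    { intros x Hx. rewrite geq by auto. unfold ff. rewrite Cnorm_mul, Cnorm_PW, Re_opp.
      assert (HL : 0 < ln x) by (apply ln_pos; auto).
      eapply Rle_trans. apply Rmult_le_compat_r. left; apply exp_pos. apply A_global; auto.
      unfold hm, K'.
      assert (E : exp (rho alpha * ln x) * exp (- Re s * ln x) = exp (- (kap * ln x)) * exp (- ln x)) by (rewrite <- !exp_plus; f_equal; unfold kap; ring).
      assert (E2 : exp (- (1 + kap / 2) * ln x) = exp (- (kap * ln x / 2)) * exp (- ln x)) by (rewrite <- exp_plus; f_equal; field; lra).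
      rewrite E2. rewrite Rmult_assoc, E.
      replace (KG alpha * (1 + ln x) * (exp (- (kap * ln x)) * exp (- ln x))) with (KG alpha * exp (- ln x) * ((1 + ln x) * exp (- (kap * ln x)))) by ring.
      replace (KG alpha * (1 + 2 / kap) * (exp (- (kap * ln x / 2)) * exp (- ln x))) with (KG alpha * exp (- ln x) * ((1 + 2 / kap) * exp (- (kap * ln x / 2)))) by ring.
      apply Rmult_le_compat_l. pose proof (exp_pos (- ln x)); nra. apply lin_exp; lra. }
    exists (2 * K' / kap). intros c d Hc Hcd.
    assert (Hcn : forall x, c <= x <= d -> continuity_pt (fun t => Cnorm (g t)) x).
    { intros x Hx. destruct (Hff x ltac:(lra)) as [l Hl].
      apply (continuity_pt_locally_ext (fun t => Cnorm (ff alpha s t)) _ (x - 1)). lra.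
      intros y Hy. unfold Rdist in Hy. apply Rabs_def2 in Hy. rewrite geq; auto. lra.
      apply (cont_Cnorm _ _ _ Hl). }
    pose (prg := continuity_implies_RiemannInt Hcd Hcn).
    assert (Hhc : forall x, c <= x <= d -> continuity_pt hm x).
    { intros x Hx. apply (D_cont hm x (K' * (exp (- (1 + kap / 2) * ln x) * (- (1 + kap / 2) * / x)))).
      unfold hm. apply D_scal. apply (D_exp (fun t => - (1 + kap / 2) * ln t)). apply D_scal. apply derivable_pt_lim_ln; lra. }
    pose (prh := continuity_implies_RiemannInt Hcd Hhc).
    exists (RiemannInt prg). split. exists prg; reflexivity.
    apply Rle_trans with (RiemannInt prh). apply RiemannInt_P19. auto. intros x Hx. apply Hbound. lra.
    assert (is_RInt hm c d (Gm d - Gm c)).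
    { apply (FTC_R Gm hm hm); auto. intros x Hx. apply HDG. lra. }
    destruct H as [pr Hpr]. rewrite (RiemannInt_P5 prh pr), Hpr. unfold Gm.
    assert (0 <= 2 * K' / kap) by (apply Rmult_le_pos; [lra|left; apply Rinv_0_lt_compat; lra]).
    assert (exp (- (kap / 2) * ln c) <= 1).
    { rewrite <- exp_0. apply exp_le. assert (0 < ln c) by (apply ln_pos; lra). nra. }
    pose proof (exp_pos (- (kap / 2) * ln d)). pose proof (exp_pos (- (kap / 2) * ln c)). nra.
  - exists (Ival alpha s). split.
    + split. exact HCRI.
      intros e He. destruct (F_lim1 alpha s Hs (e/2) ltac:(lra)) as [d1 [Hd1 P1]].
      destruct (F_liminf alpha s Ha Hs Has (e/2) ltac:(lra)) as [M PM].
      exists d1. split; auto. exists M. intros c d Hc Hd Hcd.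
      exists (Csub (Fcl alpha s d) (Fcl alpha s c)). split. apply HRI; lra.
      replace (Csub (Csub (Fcl alpha s d) (Fcl alpha s c)) (Ival alpha s)) with
        (Csub (Csub (Fcl alpha s d) (CR 0)) (Csub (Fcl alpha s c) (F1 alpha s))) by (unfold Ival; ceq; ring).
      eapply Rle_lt_trans. apply Cnorm_sub. specialize (P1 c Hc). specialize (PM d Hd). lra.
    + apply final_eq; auto.
Qed.
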